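(* Consider the sub-$\ell^\infty$ structure on $\mathbb{R}^2$ defined by $Y_1=\partial_x+x\partial_y$, $Y_2=\partial_x-x\partial_y$. If an extremal pair $(\lambda,\gamma)$ on $[0,T]$ has a regular arc, then $\gamma$ is a regular bang-bang trajectory. Moreover, there is $s>0$ such that all its arcs have length (duration) $s$, except possibly the first and the last arc, whose lengths are at most $s$. At consecutive junctions between regular arcs, the components $u_1$ and $u_2$ of the control change sign alternately.
   Context: Sub-$\ell^\infty$ structure defined by smooth vector fields $X_1,\dots,X_k$ on a manifold $M$ (here $X_1=Y_1$, $X_2=Y_2$): an admissible trajectory is an absolutely continuous curve $\gamma:[0,T]\to M$ together with a measurable control $u=(u_1,\dots,u_k):[0,T]\to\mathbb{R}^k$ with $|u_i(t)|\le1$ for all $i$ and a.e. $t$, such that $\dot\gamma(t)=\sum_i u_i(t)X_i(\gamma(t))$ for a.e. $t$. An extremal pair is a pair $(\lambda,\gamma)$ where $\gamma$ is admissible with control $u$ and $\lambda:[0,T]\to T^*M$ is absolutely continuous with $\lambda(t)\in T^*_{\gamma(t)}M\setminus\{0\}$, such that, with $\mathcal H(\lambda,p,u)=\sum_i u_i\langle\lambda,X_i(p)\rangle$, in canonical coordinates $\dot\lambda=-\partial_p\mathcal H(\lambda,\gamma,u)$, $\dot\gamma=\partial_\lambda\mathcal H(\lambda,\gamma,u)$ a.e., and there is a constant $\lambda_0\ge0$ with $\sum_iu_i(t)\langle\lambda(t),X_i(\gamma(t))\rangle=\sum_i|\langle\lambda(t),X_i(\gamma(t))\rangle|=\lambda_0$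 for a.e. $t$; $\gamma$ is then an extremal trajectory and $\lambda$ an extremal lift. The switching functions are $\varphi_j(t)=\langle\lambda(t),X_j(\gamma(t))\rangle$. The restriction of an extremal pair to an open interval $I$ is a regular arc if $\varphi_j(t)\ne0$ for all $t\in I$ and all $j$; arcs are taken maximal (not contained in a strictly larger open interval with the same property). A regular bang-bang trajectory is an extremal trajectory with an extremal lift such that $[0,T]$ minus finitely many points is a finite union of maximal regular arcs (on each of which the control is then constant with values in $\{1,-1\}^k$); these are its arcs. *)

(* Defs.v *)
From Stdlib Require Import Reals.
Open Scope R_scope.

Fixpoint rsum (f : nat -> R) (n : nat) : R :=
  match n with O => 0 | S k => rsum f k + f k end.

Definition null_set (N : R -> Prop) : Prop :=
  forall eps, 0 < eps ->
    exists a b : nat -> R,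
      (forall k, a k <= b k) /\
      (forall x, N x -> exists k, a k < x < b k) /\
      (forall m, rsum (fun k => b k - a k) m <= eps).

Definition ae_on (lo hi : R) (P : R -> Prop) : Prop :=
  exists N, null_set N /\ forall t, lo <= t <= hi -> ~ N t -> P t.

Definition outer_le (E : R -> Prop) (r : R) : Prop :=
  forall eps, 0 < eps ->
    exists a b : nat -> R,
      (forall k, a k <= b k) /\
      (forall x, E x -> exists k, a k < x < b k) /\
      (forall m, rsum (fun k => b k - a k) m <= r + eps).

Definition open_set (G : R -> Prop) : Prop :=
  forall x, G x -> exists d, 0 < d /\ forall y, Rabs (y - x) < d -> G y.

Definition leb_measurable (E : R -> Prop) : Prop :=
  forall eps, 0 < eps ->
    exists G, open_set G /\ (forall x, E x -> G x) /\
              outer_le (fun x => G x /\ ~ E x) eps.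

Definition measurable_on (T : R) (f : R -> R) : Prop :=
  forall c, leb_measurable (fun t => 0 <= t <= T /\ f t < c).

Definition abs_cont_on (T : R) (f : R -> R) : Prop :=
  forall eps, 0 < eps -> exists delta, 0 < delta /\
    forall (n : nat) (a b : nat -> R),
      (forall i, (i < n)%nat -> 0 <= a i <= b i /\ b i <= T) ->
      (forall i j, (i < n)%nat -> (j < n)%nat -> i <> j -> b i <= a j \/ b j <= a i) ->
      rsum (fun i => b i - a i) n < delta ->
      rsum (fun i => Rabs (f (b i) - f (a i))) n < eps.

(* points and covectors of R^2 = T^*R^2 fibres, in canonical coordinates *)
Definition pairing (l v : R * R) : R := fst l * fst v + snd l * snd v.

Definition Y1 (p : R * R) : R * R := (1, fst p).
Definition Y2 (p : R * R) : R * R := (1, - fst p).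

Definition Ham (l p u : R * R) : R :=
  fst u * pairing l (Y1 p) + snd u * pairing l (Y2 p).

Definition admissible (T : R) (gamma u : R -> R * R) : Prop :=
  abs_cont_on T (fun t => fst (gamma t)) /\
  abs_cont_on T (fun t => snd (gamma t)) /\
  measurable_on T (fun t => fst (u t)) /\
  measurable_on T (fun t => snd (u t)) /\
  ae_on 0 T (fun t => Rabs (fst (u t)) <= 1 /\ Rabs (snd (u t)) <= 1) /\
  ae_on 0 T (fun t =>
     derivable_pt_lim (fun s => fst (gamma s)) t
        (fst (u t) * fst (Y1 (gamma t)) + snd (u t) * fst (Y2 (gamma t))) /\
     derivable_pt_lim (fun s => snd (gamma s)) t
        (fst (u t) * snd (Y1 (gamma t)) + snd (u t) * snd (Y2 (gamma t)))).

(* Hamiltonian system in canonical coordinates, at time t: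
   lambda' = - d_p H,  gamma' = d_lambda H *)
Definition hamiltonian_eqs (gamma u lam : R -> R * R) (t : R) : Prop :=
  let l := lam t in let p := gamma t in let v := u t in
  exists dx dy dl1 dl2 : R,
    derivable_pt_lim (fun x => Ham l (x, snd p) v) (fst p) dx /\
    derivable_pt_lim (fun y => Ham l (fst p, y) v) (snd p) dy /\
    derivable_pt_lim (fun a => Ham (a, snd l) p v) (fst l) dl1 /\
    derivable_pt_lim (fun b => Ham (fst l, b) p v) (snd l) dl2 /\
    derivable_pt_lim (fun s => fst (lam s)) t (- dx) /\
    derivable_pt_lim (fun s => snd (lam s)) t (- dy) /\
    derivable_pt_lim (fun s => fst (gamma s)) t dl1 /\
    derivable_pt_lim (fun s => snd (gamma s)) t dl2.

Definition phi1 (gamma lam : R -> R * R) (t : R) : R := pairing (lam t) (Y1 (gamma t)).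
Definition phi2 (gamma lam : R -> R * R) (t : R) : R := pairing (lam t) (Y2 (gamma t)).

Definition extremal_pair (T : R) (gamma u lam : R -> R * R) : Prop :=
  admissible T gamma u /\
  abs_cont_on T (fun t => fst (lam t)) /\
  abs_cont_on T (fun t => snd (lam t)) /\
  (forall t, 0 <= t <= T -> lam t <> (0, 0)) /\
  ae_on 0 T (hamiltonian_eqs gamma u lam) /\
  exists lam0, 0 <= lam0 /\
    ae_on 0 T (fun t =>
       Ham (lam t) (gamma t) (u t) = lam0 /\
       Rabs (phi1 gamma lam t) + Rabs (phi2 gamma lam t) = lam0).

Definition regular_on (T : R) (gamma lam : R -> R * R) (a b : R) : Prop :=
  0 <= a /\ a < b /\ b <= T /\
  forall t, a < t < b -> phi1 gamma lam t <> 0 /\ phi2 gamma lam t <> 0.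

Definition regular_arc (T : R) (gamma lam : R -> R * R) (a b : R) : Prop :=
  regular_on T gamma lam a b /\
  forall a' b', a' <= a -> b <= b' -> regular_on T gamma lam a' b' ->
    a' = a /\ b' = b.

(* [0,T] minus the finitely many points t_1,...,t_{n-1} is the union of the
   maximal regular arcs (t_i, t_{i+1}), i < n, with 0 = t_0 < ... < t_n = T *)
Definition arc_decomposition (T : R) (gamma lam : R -> R * R)
    (n : nat) (tt : nat -> R) : Prop :=
  (1 <= n)%nat /\ tt O = 0 /\ tt n = T /\
  (forall i, (i < n)%nat -> regular_arc T gamma lam (tt i) (tt (S i))).

Definition regular_bang_bang (T : R) (gamma : R -> R * R) : Prop :=
  exists u lam n tt, extremal_pair T gamma u lam /\ arc_decomposition T gamma lam n tt.

Definition pm1 (c : R * R) : Prop :=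
  (fst c = 1 \/ fst c = -1) /\ (snd c = 1 \/ snd c = -1).

(* Main.v *)
Require Import Defs.
From Stdlib Require Import Reals Lra Lia Classical.
Open Scope R_scope.

Lemma Rabs_le_iff x r : Rabs x <= r <-> -r <= x <= r.
Proof. unfold Rabs; destruct (Rcase_abs x); split; intros; lra. Qed.
Lemma Rabs_lt_iff x r : Rabs x < r <-> -r < x < r.
Proof. unfold Rabs; destruct (Rcase_abs x); split; intros; lra. Qed.

Lemma rsum_S f n : rsum f (S n) = rsum f n + f n.
Proof. reflexivity. Qed.
Lemma rsum_ext f g n : (forall i, (i < n)%nat -> f i = g i) -> rsum f n = rsum g n.
Proof. induction n; simpl; intros H; auto. rewrite IHn by (intros; apply H; lia). rewrite H by lia; auto. Qed.
Lemma rsum_le f g n : (forall i, (i < n)%nat -> f i <= g i) -> rsum f n <= rsum g n.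
Proof. induction n; simpl; intros H; [lra|]. assert (H1 := H n ltac:(lia)). assert (rsum f n <= rsum g n) by (apply IHn; intros; apply H; lia). lra. Qed.
Lemma rsum_nonneg f n : (forall i, (i < n)%nat -> 0 <= f i) -> 0 <= rsum f n.
Proof. intros H. replace 0 with (rsum (fun _ => 0) n). apply rsum_le; auto. induction n; simpl; auto. rewrite IHn; [lra|]. intros; apply H; lia. Qed.
Lemma rsum_mono f m n : (forall i, 0 <= f i) -> (m <= n)%nat -> rsum f m <= rsum f n.
Proof. intros H Hmn. induction Hmn; [lra|]. simpl. specialize (H m0). lra. Qed.
Lemma rsum_plus f g n : rsum (fun i => f i + g i) n = rsum f n + rsum g n.
Proof. induction n; simpl; [lra|]. rewrite IHn; lra. Qed.
Lemma rsum_scal c f n : rsum (fun i => c * f i) n = c * rsum f n.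
Proof. induction n; simpl; [lra|]. rewrite IHn; lra. Qed.

Definition inter (f g : nat -> R) (k : nat) : R :=
  if Nat.even k then f (Nat.div2 k) else g (Nat.div2 k).

Lemma rsum_inter f g m : rsum (inter f g) (2 * m) = rsum f m + rsum g m.
Proof.
  induction m. simpl; lra.
  replace (2 * S m)%nat with (S (S (2 * m))) by lia. rewrite !rsum_S.
  rewrite IHm. unfold inter.
  replace (S (2*m)) with (2*m+1)%nat by lia.
  rewrite Nat.even_even, Nat.even_odd, Nat.div2_double, Nat.div2_odd'. lra.
Qed.

Lemma null_union N1 N2 : null_set N1 -> null_set N2 -> null_set (fun x => N1 x \/ N2 x).
Proof.
  intros H1 H2 eps Heps.
  destruct (H1 (eps/2) ltac:(lra)) as (a1 & b1 & Hab1 & Hc1 & Hs1).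
  destruct (H2 (eps/2) ltac:(lra)) as (a2 & b2 & Hab2 & Hc2 & Hs2).
  exists (inter a1 a2), (inter b1 b2). split; [|split].
  - intros k; unfold inter; destruct (Nat.even k); auto.
  - intros x [Hx|Hx].
    + destruct (Hc1 x Hx) as [k Hk]. exists (2*k)%nat. unfold inter. rewrite Nat.even_even, Nat.div2_double. auto.
    + destruct (Hc2 x Hx) as [k Hk]. exists (2*k+1)%nat. unfold inter. rewrite Nat.even_odd, Nat.div2_odd'. auto.
  - intros m.
    set (h := inter (fun k => b1 k - a1 k) (fun k => b2 k - a2 k)).
    assert (E : rsum h m <= rsum h (2*m)).
    { apply rsum_mono; [|lia]. intros i; unfold h, inter; destruct (Nat.even i); [specialize (Hab1 (Nat.div2 i))|specialize (Hab2 (Nat.div2 i))]; lra. }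
    rewrite (rsum_ext _ h).
    2:{ intros i _; unfold h, inter; destruct (Nat.even i); auto. }
    unfold h in E at 2. rewrite rsum_inter in E. specialize (Hs1 m). specialize (Hs2 m). lra.
Qed.

Lemma null_single x : null_set (fun y => y = x).
Proof.
  intros eps Heps.
  exists (fun k => match k with O => x - eps/4 | S _ => x end).
  exists (fun k => match k with O => x + eps/4 | S _ => x end).
  split; [|split].
  - intros [|k]; lra.
  - intros y ->. exists O. lra.
  - intros m. induction m; simpl; [lra|]. destruct m; simpl in *; lra.
Qed.

Lemma null_set_sub (N M : R -> Prop) : null_set N -> (forall x, M x -> N x) -> null_set M.
Proof.
  intros H HM eps Heps. destruct (H eps Heps) as (a & b & H1 & H2 & H3).
  exists a, b; repeat split; auto.
Qed.

Lemma ac_ext T f g : abs_cont_on T f -> (forall t, 0 <= t <= T -> f t = g t) -> abs_cont_on T g.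
Proof.
  intros H He eps Heps. destruct (H eps Heps) as (d & Hd & Hf). exists d; split; auto.
  intros n a b Hab Hdis Hs. rewrite (rsum_ext _ (fun i => Rabs (f (b i) - f (a i)))).
  apply (Hf n a b); auto.
  intros i Hi. destruct (Hab i Hi). rewrite !He by lra. auto.
Qed.

Lemma ac_opp T f : abs_cont_on T f -> abs_cont_on T (fun t => - f t).
Proof.
  intros H eps Heps. destruct (H eps Heps) as (d & Hd & Hf). exists d; split; auto.
  intros n a b Hab Hdis Hs. rewrite (rsum_ext _ (fun i => Rabs (f (b i) - f (a i)))).
  apply (Hf n a b); auto.
  intros i Hi. rewrite <- Rabs_Ropp. f_equal. ring.
Qed.

Lemma ac_plus T f g : abs_cont_on T f -> abs_cont_on T g -> abs_cont_on T (fun t => f t + g t).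
Proof.
  intros H1 H2 eps Heps. destruct (H1 (eps/2) ltac:(lra)) as (d1 & Hd1 & Hf1).
  destruct (H2 (eps/2) ltac:(lra)) as (d2 & Hd2 & Hf2).
  exists (Rmin d1 d2); split; [apply Rmin_glb_lt; auto|].
  intros n a b Hab Hdis Hs.
  assert (A1 := Hf1 n a b Hab Hdis ltac:(assert (Rmin d1 d2 <= d1) by apply Rmin_l; lra)).
  assert (A2 := Hf2 n a b Hab Hdis ltac:(assert (Rmin d1 d2 <= d2) by apply Rmin_r; lra)).
  eapply Rle_lt_trans.
  - apply (rsum_le _ (fun i => Rabs (f (b i) - f (a i)) + Rabs (g (b i) - g (a i)))).
    intros i _. eapply Rle_trans; [|apply Rabs_triang]. right; f_equal; ring.
  - rewrite rsum_plus. lra.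
Qed.

Lemma ac_scal T c f : abs_cont_on T f -> abs_cont_on T (fun t => c * f t).
Proof.
  intros H eps Heps.
  assert (Hc : 0 < Rabs c + 1) by (pose proof (Rabs_pos c); lra).
  destruct (H (eps / (Rabs c + 1))) as (d & Hd & Hf).
  { apply Rdiv_lt_0_compat; lra. }
  exists d; split; auto. intros n a b Hab Hdis Hs.
  specialize (Hf n a b Hab Hdis Hs).
  rewrite (rsum_ext _ (fun i => Rabs c * Rabs (f (b i) - f (a i)))).
  2:{ intros i _. rewrite <- Rabs_mult. f_equal. ring. }
  rewrite rsum_scal.
  assert (0 <= rsum (fun i => Rabs (f (b i) - f (a i))) n) by (apply rsum_nonneg; intros; apply Rabs_pos).
  assert (Rabs c * rsum (fun i => Rabs (f (b i) - f (a i))) n <= Rabs c * (eps / (Rabs c + 1))).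
  { apply Rmult_le_compat_l; [apply Rabs_pos|lra]. }
  assert (Rabs c * (eps / (Rabs c + 1)) < eps).
  { apply (Rmult_lt_reg_r (Rabs c + 1)); auto. field_simplify; [|lra]. lra. }
  lra.
Qed.

Lemma ac_id T : abs_cont_on T (fun t => t).
Proof.
  intros eps Heps. exists eps; split; auto. intros n a b Hab Hdis Hs.
  rewrite (rsum_ext _ (fun i => b i - a i)); auto.
  intros i Hi. destruct (Hab i Hi). rewrite Rabs_right; lra.
Qed.

Lemma ac_cont T f : abs_cont_on T f -> forall t, 0 <= t <= T -> forall eps, 0 < eps ->
  exists d, 0 < d /\ forall s, 0 <= s <= T -> Rabs (s - t) < d -> Rabs (f s - f t) < eps.
Proof.
  intros H t Ht eps Heps. destruct (H eps Heps) as (d & Hd & Hf). exists d; split; auto.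
  intros s Hs Hst.
  destruct (Rle_dec t s).
  - specialize (Hf 1%nat (fun _ => t) (fun _ => s)). simpl in Hf.
    assert (0 + Rabs (f s - f t) < eps); [|lra].
    apply Hf. intros; lra. intros; lia. rewrite Rabs_right in Hst; lra.
  - specialize (Hf 1%nat (fun _ => s) (fun _ => t)). simpl in Hf.
    rewrite <- Rabs_Ropp. replace (- (f s - f t)) with (f t - f s) by ring.
    assert (0 + Rabs (f t - f s) < eps); [|lra].
    apply Hf. intros; lra. intros; lia. rewrite Rabs_left in Hst; lra.
Qed.

Lemma deriv_bound f x K : derivable_pt_lim f x K -> forall eps, 0 < eps ->
  exists d, 0 < d /\ forall y, Rabs (y - x) < d -> Rabs (f y - f x - K * (y - x)) <= eps * Rabs (y - x).
Proof.
  intros H eps Heps. destruct (H eps Heps) as [[d Hd] Hf]. exists d; split; auto.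
  intros y Hy. destruct (Req_dec y x) as [->|Hne].
  - replace (f x - f x - K * (x - x)) with 0 by ring. rewrite Rabs_R0.
    apply Rmult_le_pos; [lra| apply Rabs_pos].
  - assert (Hh : y - x <> 0) by lra.
    specialize (Hf (y - x) Hh Hy). simpl in Hf. replace (x + (y - x)) with y in Hf by ring.
    replace (f y - f x - K * (y - x)) with ((y - x) * ((f y - f x) / (y - x) - K)) by (field; auto).
    rewrite Rabs_mult. rewrite (Rmult_comm eps). apply Rmult_le_compat_l; [apply Rabs_pos|lra].
Qed.

Lemma deriv_ext f g x l : (forall y, f y = g y) -> derivable_pt_lim f x l -> derivable_pt_lim g x l.
Proof.
  intros He H eps Heps. destruct (H eps Heps) as [d Hd]. exists d. intros h Hh Hl.
  rewrite <- !He. auto.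
Qed.

Lemma deriv_affine A B x : derivable_pt_lim (fun y => A + B * y) x B.
Proof.
  intros eps Heps. exists (mkposreal 1 Rlt_0_1). intros h Hh _.
  replace ((A + B * (x + h) - (A + B * x)) / h - B) with 0 by (field; auto).
  rewrite Rabs_R0; auto.
Qed.

Definition creep (f : R->R) (p q K e : R) (a b : nat -> R) (x : R) : Prop :=
  p <= x <= q /\ exists (n : nat) (al be : nat -> R) (used : nat -> bool) (m : nat),
   (forall i, (i < n)%nat -> p <= al i <= be i /\ be i <= x) /\
   (forall i j, (i < n)%nat -> (j < n)%nat -> i <> j -> be i <= al j \/ be j <= al i) /\
   (forall k, used k = true -> Rmin (b k) q <= x) /\
   (forall k, (m <= k)%nat -> used k = false) /\
   rsum (fun i => be i - al i) n <= rsum (fun k => if used k then b k - a k else 0) m /\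
   f x - f p <= (K + e) * (x - p) + rsum (fun i => Rabs (f (be i) - f (al i)) + Rabs (K + e) * (be i - al i)) n.

Lemma creep_start f p q K e a b : p <= q -> creep f p q K e a b p.
Proof.
  intros Hpq. split; [lra|]. exists O, (fun _ => 0), (fun _ => 0), (fun _ => false), O.
  repeat split; intros; try lia; try discriminate; simpl; lra.
Qed.

Lemma creep_good f p q K e a b x y : creep f p q K e a b x -> x <= y <= q ->
  f y - f x <= (K + e) * (y - x) -> creep f p q K e a b y.
Proof.
  intros [Hx (n & al & be & used & m & H1 & H2 & H3 & H4 & H5 & H6)] Hy Hf.
  split; [lra|]. exists n, al, be, used, m. repeat split; auto.
  - destruct (H1 i H); lra.
  - destruct (H1 i H); lra.
  - destruct (H1 i H); lra.
  - intros k Hk; specialize (H3 k Hk); lra.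
  - lra.
Qed.

Lemma rsum_upd g v k n : (k < n)%nat ->
  rsum (fun j => if Nat.eqb j k then v else g j) n = rsum g n + (v - g k).
Proof.
  induction n; intros Hk; [lia|]. rewrite !rsum_S.
  destruct (Nat.eq_dec k n) as [->|Hne].
  - rewrite Nat.eqb_refl. rewrite (rsum_ext _ g). lra.
    intros i Hi. destruct (Nat.eqb_spec i n); [lia|auto].
  - rewrite IHn by lia. destruct (Nat.eqb_spec n k); [lia|]. lra.
Qed.

Lemma rsum_zero_tail g m m' : (m <= m')%nat -> (forall j, (m <= j)%nat -> g j = 0) -> rsum g m' = rsum g m.
Proof.
  intros H Hg. induction H; auto. rewrite rsum_S, IHle, Hg by lia. lra.
Qed.

Lemma creep_bad f p q K e a b x k : creep f p q K e a b x -> a k < x ->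
  x < Rmin (b k) q -> creep f p q K e a b (Rmin (b k) q).
Proof.
  intros [Hx (n & al & be & used & m & H1 & H2 & H3 & H4 & H5 & H6)] Hak Hxk.
  set (y := Rmin (b k) q) in *.
  assert (Hyq : y <= q) by apply Rmin_r. assert (Hyb : y <= b k) by apply Rmin_l.
  assert (Hk : used k = false).
  { destruct (used k) eqn:E; auto. specialize (H3 k E). fold y in H3. lra. }
  split; [lra|].
  exists (S n), (fun i => if Nat.eqb i n then x else al i), (fun i => if Nat.eqb i n then y else be i),
    (fun j => if Nat.eqb j k then true else used j), (Nat.max m (S k)).
  split; [|split; [|split; [|split; [|split]]]].
  - intros i Hi. destruct (Nat.eqb_spec i n). lra. destruct (H1 i ltac:(lia)); lra.
  - intros i j Hi Hj Hij. destruct (Nat.eqb_spec i n), (Nat.eqb_spec j n); try lia.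
    + right. destruct (H1 j ltac:(lia)); lra.
    + left. destruct (H1 i ltac:(lia)); lra.
    + apply H2; lia.
  - intros j. destruct (Nat.eqb_spec j k). intros _; subst j; unfold y; lra. intros Hj; specialize (H3 j Hj); lra.
  - intros j Hj. destruct (Nat.eqb_spec j k); [lia|]. apply H4; lia.
  - rewrite rsum_S. rewrite Nat.eqb_refl.
    assert (E1 : rsum (fun i => (if Nat.eqb i n then y else be i) - (if Nat.eqb i n then x else al i)) n
              = rsum (fun i => be i - al i) n).
    { apply rsum_ext. intros i Hi. destruct (Nat.eqb_spec i n); [lia|auto]. }
    assert (E2 : rsum (fun j => if (if Nat.eqb j k then true else used j) then b j - a j else 0) (Nat.max m (S k))
              = rsum (fun j => if Nat.eqb j k then b k - a k else (if used j then b j - a j else 0)) (Nat.max m (S k))).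
    { apply rsum_ext. intros j _. destruct (Nat.eqb_spec j k); subst; auto. }
    apply (Rle_trans _ (rsum (fun i => be i - al i) n + (y - x))). { right. f_equal. apply E1. }
    eapply Rle_trans; [|right; symmetry; apply E2].
    rewrite rsum_upd by lia. rewrite Hk.
    rewrite (rsum_zero_tail (fun j => if used j then b j - a j else 0) m (Nat.max m (S k))). lra. lia.
    intros j Hj; rewrite H4 by lia; auto.
  - rewrite rsum_S. rewrite Nat.eqb_refl.
    assert (E1 : rsum (fun i => Rabs (f (if Nat.eqb i n then y else be i) - f (if Nat.eqb i n then x else al i)) + Rabs (K + e) * ((if Nat.eqb i n then y else be i) - (if Nat.eqb i n then x else al i))) n
      = rsum (fun i => Rabs (f (be i) - f (al i)) + Rabs (K + e) * (be i - al i)) n).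
    { apply rsum_ext. intros i Hi. destruct (Nat.eqb_spec i n); [lia|auto]. }
    apply (Rle_trans _ ((K + e) * (y - p) + (rsum (fun i => Rabs (f (be i) - f (al i)) + Rabs (K + e) * (be i - al i)) n + (Rabs (f y - f x) + Rabs (K + e) * (y - x))))).
    2:{ right. f_equal. f_equal. symmetry. apply E1. }
    assert (f y - f x <= Rabs (f y - f x)) by apply Rle_abs.
    assert (- (K + e) <= Rabs (K + e)) by (rewrite <- Rabs_Ropp; apply Rle_abs).
    assert (-(K+e) * (y - x) <= Rabs (K + e) * (y - x)) by (apply Rmult_le_compat_r; lra).
    lra.
Qed.

Lemma lub_approx E s : is_lub E s -> forall eps, 0 < eps -> exists x, E x /\ s - eps < x /\ x <= s.
Proof.
  intros [Hub Hl] eps Heps. apply NNPP. intros Hn.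
  assert (s <= s - eps); [|lra]. apply Hl. intros x Hx.
  destruct (Rle_dec x (s - eps)); auto. exfalso. apply Hn. exists x. split; auto. split. lra. apply Hub; auto.
Qed.

Lemma ac_le_eps T f p q N K : abs_cont_on T f -> 0 <= p -> p <= q -> q <= T -> null_set N ->
  (forall t, p < t < q -> ~ N t -> derivable_pt_lim f t K) ->
  forall e, 0 < e <= 1 -> f q - f p <= K * (q - p) + e * ((q - p) + 2 + Rabs K).
Proof.
  intros HAC Hp Hpq HqT HN Hd e He.
  destruct (HAC e ltac:(lra)) as (dl & Hdl & Hac).
  set (N' := fun t => (N t \/ t = p) \/ t = q).
  assert (HN' : null_set N') by (apply null_union; [apply null_union|]; auto using null_single).
  set (eta := Rmin dl e / 2).
  assert (Heta : 0 < eta) by (unfold eta; assert (0 < Rmin dl e) by (apply Rmin_glb_lt; lra); lra).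
  assert (Heta2 : eta < dl /\ eta <= e) by (unfold eta; assert (0 < Rmin dl e) by (apply Rmin_glb_lt; lra);
     assert (Rmin dl e <= dl) by apply Rmin_l; assert (Rmin dl e <= e) by apply Rmin_r; lra).
  destruct (HN' eta Heta) as (a & b & Hab & Hcov & Hsum).
  assert (Hq : creep f p q K e a b q).
  { destruct (completeness (creep f p q K e a b)) as [s Hs].
    { exists q. intros x [Hx _]. lra. }
    { exists p. apply creep_start; auto. }
    assert (Hps : p <= s) by (apply (proj1 Hs); apply creep_start; auto).
    assert (Hsq : s <= q) by (apply (proj2 Hs); intros x [Hx _]; lra).
    destruct (classic (N' s)) as [Hns|Hns].
    - destruct (Hcov s Hns) as [k Hk].
      destruct (lub_approx _ _ Hs (s - a k) ltac:(lra)) as (x & Hx & Hx1 & Hx2).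
      destruct (Req_dec x q) as [<-|Hxq]; auto.
      assert (Hxq' : x < q) by (destruct Hx; lra).
      assert (Hxm : x < Rmin (b k) q) by (apply Rmin_glb_lt; lra).
      assert (Hc := creep_bad f p q K e a b x k Hx ltac:(lra) Hxm).
      assert (Hle := proj1 Hs _ Hc).
      unfold Rmin in Hc, Hle. destruct (Rle_dec (b k) q); auto. lra.
    - exfalso. assert (Hs1 : p < s < q) by (unfold N' in Hns; split; apply Rnot_le_lt; intro; apply Hns; [left; right|right]; lra).
      assert (HnN : ~ N s) by (intro; apply Hns; left; left; auto).
      destruct (deriv_bound _ _ _ (Hd s Hs1 HnN) e ltac:(lra)) as (d & Hd0 & Hdb).
      destruct (lub_approx _ _ Hs d Hd0) as (x & Hx & Hx1 & Hx2).
      set (y := Rmin (s + d/2) q).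
      assert (Hy1 : s < y) by (apply Rmin_glb_lt; lra).
      assert (Hy2 : y <= q) by apply Rmin_r.
      assert (Hy3 : y <= s + d/2) by apply Rmin_l.
      assert (Hc : creep f p q K e a b y).
      { apply (creep_good _ _ _ _ _ _ _ x); [auto|lra|].
        assert (B1 := Hdb y ltac:(rewrite Rabs_right; lra)).
        assert (B2 := Hdb x ltac:(rewrite Rabs_left1; lra)).
        rewrite (Rabs_right (y - s)) in B1 by lra. rewrite (Rabs_left1 (x - s)) in B2 by lra.
        apply Rabs_le_iff in B1. apply Rabs_le_iff in B2. nra. }
      assert (Hle := proj1 Hs _ Hc). lra. }
  destruct Hq as [_ (n & al & be & used & m & H1 & H2 & H3 & H4 & H5 & H6)].
  assert (Hw : rsum (fun k => if used k then b k - a k else 0) m <= rsum (fun k => b k - a k) m).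
  { apply rsum_le. intros i _. destruct (used i); [lra|specialize (Hab i); lra]. }
  specialize (Hsum m).
  assert (Hacs := Hac n al be ltac:(intros i Hi; destruct (H1 i Hi); lra) H2 ltac:(lra)).
  rewrite rsum_plus, rsum_scal in H6.
  assert (Rabs (K + e) * rsum (fun i => be i - al i) n <= Rabs (K + e) * e).
  { apply Rmult_le_compat_l; [apply Rabs_pos|lra]. }
  assert (Rabs (K + e) <= Rabs K + e) by (eapply Rle_trans; [apply Rabs_triang|rewrite (Rabs_right e); lra]).
  assert (Rabs (K + e) * e <= (Rabs K + 1) * e) by (apply Rmult_le_compat_r; lra).
  nra.
Qed.

Lemma ac_le T f p q N K : abs_cont_on T f -> 0 <= p -> p <= q -> q <= T -> null_set N ->
  (forall t, p < t < q -> ~ N t -> derivable_pt_lim f t K) -> f q - f p <= K * (q - p).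
Proof.
  intros. set (C := (q - p) + 2 + Rabs K).
  assert (HC : 0 < C) by (unfold C; pose proof (Rabs_pos K); lra).
  destruct (Rle_dec (f q - f p) (K * (q - p))) as [|Hn]; auto. exfalso.
  set (D := f q - f p - K * (q - p)).
  assert (HD : 0 < D) by (unfold D; lra).
  set (e := Rmin 1 (D / (2 * C))).
  assert (He : 0 < e <= 1).
  { unfold e. split. apply Rmin_glb_lt; [lra|]. apply Rdiv_lt_0_compat; lra. apply Rmin_l. }
  assert (He2 : e * C <= D / 2).
  { assert (e <= D / (2 * C)) by apply Rmin_r.
    replace (D / 2) with (D / (2 * C) * C) by (field; lra). apply Rmult_le_compat_r; lra. }
  assert (Hb := ac_le_eps T f p q N K H H0 H1 H2 H3 H4 e He). fold C in Hb. unfold D in *. lra.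
Qed.

Lemma ac_eq T f p q N K : abs_cont_on T f -> 0 <= p -> p <= q -> q <= T -> null_set N ->
  (forall t, p < t < q -> ~ N t -> derivable_pt_lim f t K) -> f q - f p = K * (q - p).
Proof.
  intros. apply Rle_antisym. eapply ac_le; eauto.
  assert (- f q - - f p <= - K * (q - p)); [|lra].
  apply (ac_le T (fun t => - f t) p q N (-K)); auto. apply ac_opp; auto.
  intros t Ht HNt. apply (derivable_pt_lim_opp f t K). auto.
Qed.

Lemma null_dense N p q : null_set N -> 0 <= p -> p < q -> exists t, p < t < q /\ ~ N t.
Proof.
  intros HN Hp Hpq. apply NNPP. intros Hn.
  assert (H := ac_le q (fun t => t) p q N 0 (ac_id q) Hp ltac:(lra) ltac:(lra) HN).
  assert (q - p <= 0 * (q - p)); [|lra].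
  apply H. intros t Ht HNt. exfalso. apply Hn. exists t; auto.
Qed.

Definition clamp (T t : R) : R := Rmax 0 (Rmin T t).

Lemma clamp_in T t : 0 <= T -> 0 <= clamp T t <= T.
Proof. intros; unfold clamp, Rmax, Rmin; repeat destruct Rle_dec; lra. Qed.
Lemma clamp_id T t : 0 <= t <= T -> clamp T t = t.
Proof. intros; unfold clamp, Rmax, Rmin; repeat destruct Rle_dec; lra. Qed.
Lemma clamp_lip T s t : 0 <= T -> Rabs (clamp T s - clamp T t) <= Rabs (s - t).
Proof. intros; unfold clamp, Rmax, Rmin; repeat destruct Rle_dec; apply Rabs_le_iff;
  unfold Rabs; destruct Rcase_abs; lra. Qed.

Lemma cont_of_eps f : (forall x eps, 0 < eps -> exists d, 0 < d /\ forall y, Rabs (y - x) < d -> Rabs (f y - f x) < eps) -> continuity f.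
Proof.
  intros H x eps Heps. destruct (H x eps Heps) as (d & Hd & Hf). exists d; split; auto.
  intros y [_ Hy]. simpl in *. unfold Rdist in *. auto.
Qed.

Lemma eps_of_cont f x : continuity_pt f x -> forall eps, 0 < eps -> exists d, 0 < d /\ forall y, Rabs (y - x) < d -> Rabs (f y - f x) < eps.
Proof.
  intros H eps Heps. destruct (H eps Heps) as (d & Hd & Hf). exists d; split; auto.
  intros y Hy. destruct (Req_dec y x) as [->|Hne].
  - replace (f x - f x) with 0 by ring. rewrite Rabs_R0; auto.
  - apply (Hf y). split; [split; [exact I|auto]|]. simpl; unfold Rdist; auto.
Qed.

Lemma cont_neq f x c : continuity_pt f x -> f x <> c -> exists d, 0 < d /\ forall y, Rabs (y - x) < d -> f y <> c.
Proof.
  intros H Hne. destruct (eps_of_cont f x H (Rabs (f x - c))) as (d & Hd & Hf).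
  { apply Rabs_pos_lt; lra. }
  exists d; split; auto. intros y Hy Heq. specialize (Hf y Hy). rewrite Heq in Hf.
  rewrite <- Rabs_Ropp in Hf. replace (- (c - f x)) with (f x - c) in Hf by ring. lra.
Qed.

Lemma ac_clamp_cont T h : 0 < T -> abs_cont_on T h -> continuity (fun t => h (clamp T t)).
Proof.
  intros HT H. apply cont_of_eps. intros x eps Heps.
  destruct (ac_cont T h H (clamp T x) (clamp_in T x ltac:(lra)) eps Heps) as (d & Hd & Hf).
  exists d; split; auto. intros y Hy. apply Hf. apply clamp_in; lra.
  eapply Rle_lt_trans; [apply clamp_lip; lra|auto].
Qed.

Definition setup T (gamma u lam : R -> R * R) (N : R -> Prop) L lam0 : Prop :=
  0 < T /\ null_set N /\ 0 < lam0 /\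
  abs_cont_on T (fun t => fst (lam t)) /\ abs_cont_on T (fun t => fst (gamma t)) /\
  abs_cont_on T (fun t => snd (lam t)) /\
  (forall t, 0 <= t <= T -> snd (lam t) = L) /\
  (forall t, 0 <= t <= T -> Rabs (phi1 gamma lam t) + Rabs (phi2 gamma lam t) = lam0) /\
  (forall t, 0 <= t <= T -> ~ N t ->
     Rabs (fst (u t)) <= 1 /\ Rabs (snd (u t)) <= 1 /\
     fst (u t) * phi1 gamma lam t + snd (u t) * phi2 gamma lam t = lam0 /\
     derivable_pt_lim (fun s => fst (lam s)) t (-(fst (u t) - snd (u t)) * L) /\
     derivable_pt_lim (fun s => fst (gamma s)) t (fst (u t) + snd (u t))).

Definition Phi1 T gamma lam t := phi1 gamma lam (clamp T t).
Definition Phi2 T gamma lam t := phi2 gamma lam (clamp T t).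

Lemma Phi1_cont T gamma u lam N L lam0 : setup T gamma u lam N L lam0 -> continuity (Phi1 T gamma lam).
Proof.
  intros (HT & _ & _ & H1 & H2 & H3 & _).
  assert (C1 := ac_clamp_cont T _ HT H1). assert (C2 := ac_clamp_cont T _ HT H2).
  assert (C3 := ac_clamp_cont T _ HT H3).
  assert (C4 : continuity (fun _ : R => 1)) by (apply continuity_const; intros ? ?; auto).
  unfold Phi1, phi1, pairing, Y1. simpl.
  exact (continuity_plus _ _ (continuity_mult _ _ C1 C4) (continuity_mult _ _ C3 C2)).
Qed.

Lemma Phi2_cont T gamma u lam N L lam0 : setup T gamma u lam N L lam0 -> continuity (Phi2 T gamma lam).
Proof.
  intros (HT & _ & _ & H1 & H2 & H3 & _).
  assert (C1 := ac_clamp_cont T _ HT H1). assert (C2 := ac_clamp_cont T _ HT H2).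
  assert (C3 := ac_clamp_cont T _ HT H3).
  assert (C4 : continuity (fun _ : R => 1)) by (apply continuity_const; intros ? ?; auto).
  unfold Phi2, phi2, pairing, Y2. simpl.
  exact (continuity_plus _ _ (continuity_mult _ _ C1 C4) (continuity_mult _ _ C3 (continuity_opp _ C2))).
Qed.

Lemma sign_u1 T gamma u lam N L lam0 t s : setup T gamma u lam N L lam0 -> 0 <= t <= T -> ~ N t ->
  (s = 1 \/ s = -1) -> 0 < s * phi1 gamma lam t -> fst (u t) = s.
Proof.
  intros (HT & _ & _ & _ & _ & _ & _ & Hs & Hg) Ht HN Hs1 Hp.
  destruct (Hg t Ht HN) as (U1 & U2 & E & _). specialize (Hs t Ht).
  set (a := phi1 gamma lam t) in *. set (b := phi2 gamma lam t) in *.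
  apply Rabs_le_iff in U1. apply Rabs_le_iff in U2.
  assert (fst (u t) * a <= Rabs a) by (unfold Rabs; destruct Rcase_abs; nra).
  assert (snd (u t) * b <= Rabs b) by (unfold Rabs; destruct Rcase_abs; nra).
  assert (Rabs a = s * a) by (destruct Hs1; subst; unfold Rabs; destruct Rcase_abs; lra).
  destruct Hs1; subst; nra.
Qed.

Lemma sign_u2 T gamma u lam N L lam0 t s : setup T gamma u lam N L lam0 -> 0 <= t <= T -> ~ N t ->
  (s = 1 \/ s = -1) -> 0 < s * phi2 gamma lam t -> snd (u t) = s.
Proof.
  intros (HT & _ & _ & _ & _ & _ & _ & Hs & Hg) Ht HN Hs1 Hp.
  destruct (Hg t Ht HN) as (U1 & U2 & E & _). specialize (Hs t Ht).
  set (a := phi1 gamma lam t) in *. set (b := phi2 gamma lam t) in *.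
  apply Rabs_le_iff in U1. apply Rabs_le_iff in U2.
  assert (fst (u t) * a <= Rabs a) by (unfold Rabs; destruct Rcase_abs; nra).
  assert (snd (u t) * b <= Rabs b) by (unfold Rabs; destruct Rcase_abs; nra).
  assert (Rabs b = s * b) by (destruct Hs1; subst; unfold Rabs; destruct Rcase_abs; lra).
  destruct Hs1; subst; nra.
Qed.

Definition sgnR (x : R) : R := if Rlt_dec 0 x then 1 else -1.

Lemma const_sign (F : R -> R) p q : continuity F -> p < q -> (forall t, p < t < q -> F t <> 0) ->
  forall t, p < t < q -> 0 < sgnR (F ((p+q)/2)) * F t.
Proof.
  intros HF Hpq Hnz t Ht.
  set (m := (p+q)/2). assert (Hm : p < m < q) by (unfold m; lra).
  assert (Hs : sgnR (F m) = 1 \/ sgnR (F m) = -1) by (unfold sgnR; destruct Rlt_dec; auto).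
  assert (Hfm : 0 < sgnR (F m) * F m).
  { specialize (Hnz m Hm). unfold sgnR; destruct Rlt_dec; lra. }
  set (s := sgnR (F m)) in *.
  destruct (Rlt_dec 0 (s * F t)) as [|Hn]; auto. exfalso.
  assert (Hft : s * F t < 0).
  { specialize (Hnz t Ht). destruct Hs as [E|E]; rewrite E in *; nra. }
  assert (Hg : continuity (mult_real_fct s F)) by (apply continuity_scal; auto).
  destruct (Rlt_le_dec t m) as [Htm|Htm].
  - destruct (IVT (mult_real_fct s F) t m Hg Htm Hft Hfm) as (z & Hz & Hz0).
    unfold mult_real_fct in Hz0. apply (Hnz z); [lra|]. destruct Hs as [E|E]; rewrite E in *; lra.
  - destruct (Req_dec t m) as [->|Hne]; [lra|].
    assert (Hg' : continuity (opp_fct (mult_real_fct s F))) by (apply continuity_opp; auto).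
    destruct (IVT (opp_fct (mult_real_fct s F)) m t Hg' ltac:(lra)) as (z & Hz & Hz0).
    { unfold opp_fct, mult_real_fct; lra. } { unfold opp_fct, mult_real_fct; lra. }
    unfold opp_fct, mult_real_fct in Hz0. apply (Hnz z); [lra|]. destruct Hs as [E|E]; rewrite E in *; lra.
Qed.

Lemma sgnR_pm x : sgnR x = 1 \/ sgnR x = -1.
Proof. unfold sgnR; destruct Rlt_dec; auto. Qed.

Lemma endpt p q c k : p < q -> (forall t, p < t < q -> 0 < c + k * (t - p)) -> 0 <= c.
Proof.
  intros Hpq H. destruct (Rle_dec 0 c) as [|Hc]; auto. exfalso.
  set (h := Rmin ((q - p)/2) (-c / (Rabs k + 1))).
  assert (Hk : 0 < Rabs k + 1) by (pose proof (Rabs_pos k); lra).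
  assert (Hh : 0 < h) by (apply Rmin_glb_lt; [lra|apply Rdiv_lt_0_compat; lra]).
  assert (Hh1 : h <= (q-p)/2) by apply Rmin_l.
  assert (Hh2 : h <= -c / (Rabs k + 1)) by apply Rmin_r.
  specialize (H (p + h) ltac:(lra)). replace (p + h - p) with h in H by ring.
  assert (k * h <= Rabs k * h) by (apply Rmult_le_compat_r; [lra|apply Rle_abs]).
  assert (Rabs k * h <= Rabs k * (-c / (Rabs k + 1))) by (apply Rmult_le_compat_l; [apply Rabs_pos|lra]).
  assert (Rabs k * (-c / (Rabs k + 1)) = -c - (-c / (Rabs k + 1))) by (field; lra).
  assert (0 < -c / (Rabs k + 1)) by (apply Rdiv_lt_0_compat; lra).
  lra.
Qed.

Lemma endpt2 p q c k : p < q -> (forall t, p < t < q -> 0 < c + k * (t - p)) -> 0 <= c /\ 0 <= c + k * (q - p).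
Proof.
  intros Hpq H. split. eapply endpt; eauto.
  apply (endpt p q (c + k * (q - p)) (-k)); auto. intros t Ht.
  specialize (H (p + q - t) ltac:(lra)). replace (c + k * (q - p) + - k * (t - p)) with (c + k * (p + q - t - p)) by ring. auto.
Qed.

Lemma deriv_eq f x l l' : derivable_pt_lim f x l -> l = l' -> derivable_pt_lim f x l'.
Proof. intros H ->; auto. Qed.

Lemma phi1_eq T gamma u lam N L lam0 t : setup T gamma u lam N L lam0 -> 0 <= t <= T ->
  phi1 gamma lam t = fst (lam t) + L * fst (gamma t).
Proof. intros (_ & _ & _ & _ & _ & _ & HL & _) Ht. unfold phi1, pairing, Y1; simpl. rewrite HL; auto. ring. Qed.
Lemma phi2_eq T gamma u lam N L lam0 t : setup T gamma u lam N L lam0 -> 0 <= t <= T ->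
  phi2 gamma lam t = fst (lam t) + (- L) * fst (gamma t).
Proof. intros (_ & _ & _ & _ & _ & _ & HL & _) Ht. unfold phi2, pairing, Y2; simpl. rewrite HL; auto. ring. Qed.

Lemma L1 T gamma u lam N L lam0 p q : setup T gamma u lam N L lam0 -> 0 <= p -> p < q -> q <= T ->
  (forall t, p < t < q -> phi2 gamma lam t <> 0) ->
  (forall t, p < t < q -> 0 < sgnR (phi2 gamma lam ((p+q)/2)) * phi2 gamma lam t) /\
  (forall t, p <= t <= q -> phi1 gamma lam t = phi1 gamma lam p + 2 * sgnR (phi2 gamma lam ((p+q)/2)) * L * (t - p)) /\
  (forall t, p < t < q -> ~ N t -> snd (u t) = sgnR (phi2 gamma lam ((p+q)/2))).
Proof.
  intros HS Hp Hpq HqT Hnz.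
  assert (HS' := HS). destruct HS' as (HT & HN & Hl0 & H1 & H2 & H3 & HL & Hsum & Hg).
  assert (Hsg : forall t, p < t < q -> 0 < sgnR (phi2 gamma lam ((p+q)/2)) * phi2 gamma lam t).
  { intros t Ht. assert (E : forall x, p <= x <= q -> Phi2 T gamma lam x = phi2 gamma lam x).
    { intros x Hx. unfold Phi2. rewrite clamp_id; auto. lra. }
    rewrite <- !E by lra. apply const_sign; auto. eapply Phi2_cont; eauto.
    intros x Hx. rewrite E by lra. auto. }
  assert (Hu : forall t, p < t < q -> ~ N t -> snd (u t) = sgnR (phi2 gamma lam ((p+q)/2))).
  { intros t Ht HNt. eapply sign_u2; eauto. lra. apply sgnR_pm. }
  split; [auto|split; [|auto]].
  intros t Ht. rewrite !(phi1_eq _ _ _ _ _ _ _ _ HS) by lra.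
  assert (AC : abs_cont_on T (fun s => fst (lam s) + L * fst (gamma s))).
  { apply ac_plus; auto. apply ac_scal; auto. }
  assert (E : (fst (lam t) + L * fst (gamma t)) - (fst (lam p) + L * fst (gamma p)) = (2 * sgnR (phi2 gamma lam ((p+q)/2)) * L) * (t - p)).
  2:{ lra. }
  apply (ac_eq T (fun s => fst (lam s) + L * fst (gamma s)) p t N _ AC Hp ltac:(lra) ltac:(lra) HN).
  intros s Hs HNs. destruct (Hg s ltac:(lra) HNs) as (_ & _ & _ & D1 & D2).
  assert (D := derivable_pt_lim_plus _ _ s _ _ D1 (derivable_pt_lim_scal _ L s _ D2)).
  eapply deriv_eq; [exact D|]. rewrite (Hu s ltac:(lra) HNs). ring.
Qed.

Lemma L2 T gamma u lam N L lam0 p q : setup T gamma u lam N L lam0 -> 0 <= p -> p < q -> q <= T ->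
  (forall t, p < t < q -> phi1 gamma lam t <> 0) ->
  (forall t, p < t < q -> 0 < sgnR (phi1 gamma lam ((p+q)/2)) * phi1 gamma lam t) /\
  (forall t, p <= t <= q -> phi2 gamma lam t = phi2 gamma lam p - 2 * sgnR (phi1 gamma lam ((p+q)/2)) * L * (t - p)) /\
  (forall t, p < t < q -> ~ N t -> fst (u t) = sgnR (phi1 gamma lam ((p+q)/2))).
Proof.
  intros HS Hp Hpq HqT Hnz.
  assert (HS' := HS). destruct HS' as (HT & HN & Hl0 & H1 & H2 & H3 & HL & Hsum & Hg).
  assert (Hsg : forall t, p < t < q -> 0 < sgnR (phi1 gamma lam ((p+q)/2)) * phi1 gamma lam t).
  { intros t Ht. assert (E : forall x, p <= x <= q -> Phi1 T gamma lam x = phi1 gamma lam x).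
    { intros x Hx. unfold Phi1. rewrite clamp_id; auto. lra. }
    rewrite <- !E by lra. apply const_sign; auto. eapply Phi1_cont; eauto.
    intros x Hx. rewrite E by lra. auto. }
  assert (Hu : forall t, p < t < q -> ~ N t -> fst (u t) = sgnR (phi1 gamma lam ((p+q)/2))).
  { intros t Ht HNt. eapply sign_u1; eauto. lra. apply sgnR_pm. }
  split; [auto|split; [|auto]].
  intros t Ht. rewrite !(phi2_eq _ _ _ _ _ _ _ _ HS) by lra.
  assert (AC : abs_cont_on T (fun s => fst (lam s) + (- L) * fst (gamma s))).
  { apply ac_plus; auto. apply ac_scal; auto. }
  assert (E : (fst (lam t) + (-L) * fst (gamma t)) - (fst (lam p) + (-L) * fst (gamma p)) = (- 2 * sgnR (phi1 gamma lam ((p+q)/2)) * L) * (t - p)).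
  2:{ lra. }
  apply (ac_eq T (fun s => fst (lam s) + (-L) * fst (gamma s)) p t N _ AC Hp ltac:(lra) ltac:(lra) HN).
  intros s Hs HNs. destruct (Hg s ltac:(lra) HNs) as (_ & _ & _ & D1 & D2).
  assert (D := derivable_pt_lim_plus _ _ s _ _ D1 (derivable_pt_lim_scal _ (-L) s _ D2)).
  eapply deriv_eq; [exact D|]. rewrite (Hu s ltac:(lra) HNs). ring.
Qed.

Definition regp gamma lam p q := forall t, p < t < q -> phi1 gamma lam t <> 0 /\ phi2 gamma lam t <> 0.
Definition Zp gamma lam t := phi1 gamma lam t = 0 \/ phi2 gamma lam t = 0.

Lemma arc_facts T gamma u lam N L lam0 p q : setup T gamma u lam N L lam0 -> 0 <= p -> p < q -> q <= T ->
  regp gamma lam p q ->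
  let s1 := sgnR (phi1 gamma lam ((p+q)/2)) in let s2 := sgnR (phi2 gamma lam ((p+q)/2)) in
  (forall t, p <= t <= q -> phi1 gamma lam t = phi1 gamma lam p + 2 * s2 * L * (t - p) /\
                            phi2 gamma lam t = phi2 gamma lam p - 2 * s1 * L * (t - p)) /\
  (forall t, p < t < q -> 0 < s1 * phi1 gamma lam t /\ 0 < s2 * phi2 gamma lam t) /\
  (0 <= s1 * phi1 gamma lam p /\ 0 <= s1 * phi1 gamma lam q /\ 0 <= s2 * phi2 gamma lam p /\ 0 <= s2 * phi2 gamma lam q) /\
  (forall t, p < t < q -> ~ N t -> u t = (s1, s2)).
Proof.
  intros HS Hp Hpq HqT Hr s1 s2.
  destruct (L1 T gamma u lam N L lam0 p q HS Hp Hpq HqT ltac:(intros t Ht; apply (Hr t Ht))) as (A1 & B1 & C1).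
  destruct (L2 T gamma u lam N L lam0 p q HS Hp Hpq HqT ltac:(intros t Ht; apply (Hr t Ht))) as (A2 & B2 & C2).
  fold s1 s2 in A1, B1, C1, A2, B2, C2.
  split; [intros; split; auto|split; [intros; split; auto|split]].
  - assert (E1 : forall t, p < t < q -> 0 < s1 * phi1 gamma lam p + (2 * s1 * s2 * L) * (t - p)).
    { intros t Ht. specialize (A2 t Ht). rewrite B1 in A2 by lra. nra. }
    assert (E2 : forall t, p < t < q -> 0 < s2 * phi2 gamma lam p + (- 2 * s1 * s2 * L) * (t - p)).
    { intros t Ht. specialize (A1 t Ht). rewrite B2 in A1 by lra. nra. }
    destruct (endpt2 p q _ _ Hpq E1). destruct (endpt2 p q _ _ Hpq E2).
    rewrite (B1 q), (B2 q) by lra. nra.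
  - intros t Ht HNt. rewrite <- (C1 t Ht HNt), <- (C2 t Ht HNt). destruct (u t); auto.
Qed.

Lemma div_le D c a : 0 < c -> D * c <= a -> D <= a / c.
Proof. intros. apply (Rmult_le_reg_r c); auto. field_simplify; lra. Qed.
Lemma div_eq D c a : 0 < c -> D * c = a -> D = a / c.
Proof. intros. subst. field. lra. Qed.

Lemma abs_pm s x : (s = 1 \/ s = -1) -> 0 <= s * x -> Rabs x = s * x.
Proof. intros [->| ->] H; unfold Rabs; destruct Rcase_abs; lra. Qed.

Lemma CL T gamma u lam N L lam0 p q : setup T gamma u lam N L lam0 -> L <> 0 -> 0 <= p -> p < q -> q <= T ->
  regp gamma lam p q ->
  q - p <= lam0 / (2 * Rabs L) /\
  (phi1 gamma lam p = 0 -> phi1 gamma lam q <> 0 /\ (Zp gamma lam q -> phi2 gamma lam q = 0 /\ q - p = lam0 / (2 * Rabs L))) /\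
  (phi2 gamma lam p = 0 -> phi2 gamma lam q <> 0 /\ (Zp gamma lam q -> phi1 gamma lam q = 0 /\ q - p = lam0 / (2 * Rabs L))).
Proof.
  intros HS HL Hp Hpq HqT Hr. unfold Zp.
  destruct (arc_facts T gamma u lam N L lam0 p q HS Hp Hpq HqT Hr) as (A & B & (C1 & C2 & C3 & C4) & _).
  set (s1 := sgnR (phi1 gamma lam ((p+q)/2))) in *. set (s2 := sgnR (phi2 gamma lam ((p+q)/2))) in *.
  assert (Hs1 : s1 = 1 \/ s1 = -1) by apply sgnR_pm. assert (Hs2 : s2 = 1 \/ s2 = -1) by apply sgnR_pm.
  assert (HSp := HS). destruct HSp as (_ & _ & Hl0 & _ & _ & _ & _ & Hsum & _).
  assert (Sp := Hsum p ltac:(lra)). assert (Sq := Hsum q ltac:(lra)).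
  rewrite (abs_pm s1), (abs_pm s2) in Sp, Sq by auto.
  destruct (A q ltac:(lra)) as [Aq1 Aq2]. destruct (B ((p+q)/2) ltac:(lra)) as [Bm1 Bm2].
  destruct (A ((p+q)/2) ltac:(lra)) as [Am1 Am2].
  assert (HaL : 0 < 2 * Rabs L) by (assert (0 < Rabs L) by (apply Rabs_pos_lt; auto); lra).
  set (D := q - p) in *. set (x1 := phi1 gamma lam p) in *. set (x2 := phi2 gamma lam p) in *.
  set (y1 := phi1 gamma lam q) in *. set (y2 := phi2 gamma lam q) in *.
  set (m1 := phi1 gamma lam ((p+q)/2)) in *. set (m2 := phi2 gamma lam ((p+q)/2)) in *.
  replace ((p + q) / 2 - p) with (D/2) in Am1, Am2 by (unfold D; field).
  assert (HD : 0 < D) by (unfold D; lra).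
  destruct (Rle_dec 0 L) as [HL0|HL0]; [rewrite (Rabs_right L) in * by lra | rewrite (Rabs_left L) in * by lra];
  (split; [apply div_le; auto; destruct Hs1 as [E1|E1]; destruct Hs2 as [E2|E2]; rewrite E1, E2 in *; nra|]);
  (split; intros H0; (split; [intro Hq0; destruct Hs1 as [E1|E1]; destruct Hs2 as [E2|E2]; rewrite E1, E2 in *; nra|]);
    intros [Z|Z]; (split; [auto|]); (try (exfalso; destruct Hs1 as [E1|E1]; destruct Hs2 as [E2|E2]; rewrite E1, E2 in *; nra));
    apply div_eq; auto; destruct Hs1 as [E1|E1]; destruct Hs2 as [E2|E2]; rewrite E1, E2 in *; nra).
Qed.

Lemma Phi1_eq T gamma lam t : 0 <= t <= T -> Phi1 T gamma lam t = phi1 gamma lam t.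
Proof. intros; unfold Phi1; rewrite clamp_id; auto. Qed.
Lemma Phi2_eq T gamma lam t : 0 <= t <= T -> Phi2 T gamma lam t = phi2 gamma lam t.
Proof. intros; unfold Phi2; rewrite clamp_id; auto. Qed.

Lemma near_nz1 T gamma u lam N L lam0 p : setup T gamma u lam N L lam0 -> 0 <= p <= T -> phi1 gamma lam p <> 0 ->
  exists d, 0 < d /\ forall t, 0 <= t <= T -> Rabs (t - p) < d -> phi1 gamma lam t <> 0.
Proof.
  intros HS Hp Hn. assert (Hn' : Phi1 T gamma lam p <> 0) by (rewrite Phi1_eq; auto).
  destruct (cont_neq (Phi1 T gamma lam) p 0 (Phi1_cont _ _ _ _ _ _ _ HS p) Hn') as (d & Hd & H).
  exists d; split; auto. intros t Ht Htp. rewrite <- (Phi1_eq T); auto.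
Qed.
Lemma near_nz2 T gamma u lam N L lam0 p : setup T gamma u lam N L lam0 -> 0 <= p <= T -> phi2 gamma lam p <> 0 ->
  exists d, 0 < d /\ forall t, 0 <= t <= T -> Rabs (t - p) < d -> phi2 gamma lam t <> 0.
Proof.
  intros HS Hp Hn. assert (Hn' : Phi2 T gamma lam p <> 0) by (rewrite Phi2_eq; auto).
  destruct (cont_neq (Phi2 T gamma lam) p 0 (Phi2_cont _ _ _ _ _ _ _ HS p) Hn') as (d & Hd & H).
  exists d; split; auto. intros t Ht Htp. rewrite <- (Phi2_eq T); auto.
Qed.

Lemma not_both0 T gamma u lam N L lam0 t : setup T gamma u lam N L lam0 -> 0 <= t <= T ->
  phi1 gamma lam t = 0 -> phi2 gamma lam t <> 0.
Proof.
  intros (_ & _ & Hl0 & _ & _ & _ & _ & Hs & _) Ht H1 H2. specialize (Hs t Ht). rewrite H1, H2, Rabs_R0 in Hs. lra.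
Qed.

Lemma start T gamma u lam N L lam0 p : setup T gamma u lam N L lam0 -> L <> 0 -> 0 <= p < T ->
  exists q, p < q <= T /\ regp gamma lam p q.
Proof.
  intros HS HL Hp.
  destruct (Req_dec (phi1 gamma lam p) 0) as [H1|H1].
  - assert (H2 := not_both0 _ _ _ _ _ _ _ p HS ltac:(lra) H1).
    destruct (near_nz2 _ _ _ _ _ _ _ p HS ltac:(lra) H2) as (d & Hd & Hn).
    set (q := p + Rmin d (T - p) / 2).
    assert (Hm : 0 < Rmin d (T - p)) by (apply Rmin_glb_lt; lra).
    assert (Hm1 : Rmin d (T - p) <= d) by apply Rmin_l. assert (Hm2 : Rmin d (T - p) <= T - p) by apply Rmin_r.
    exists q. split; [unfold q; lra|].
    assert (Hz : forall t, p < t < q -> phi2 gamma lam t <> 0).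
    { intros t Ht. apply Hn. unfold q in Ht; lra. rewrite Rabs_right; unfold q in Ht; lra. }
    destruct (L1 T gamma u lam N L lam0 p q HS ltac:(lra) ltac:(unfold q; lra) ltac:(unfold q; lra) Hz) as (_ & B & _).
    intros t Ht. split; [|auto]. rewrite B by lra. rewrite H1.
    destruct (sgnR_pm (phi2 gamma lam ((p+q)/2))) as [E|E]; rewrite E; intro; apply HL; nra.
  - destruct (Req_dec (phi2 gamma lam p) 0) as [H2|H2].
    + destruct (near_nz1 _ _ _ _ _ _ _ p HS ltac:(lra) H1) as (d & Hd & Hn).
      set (q := p + Rmin d (T - p) / 2).
      assert (Hm : 0 < Rmin d (T - p)) by (apply Rmin_glb_lt; lra).
      assert (Hm1 : Rmin d (T - p) <= d) by apply Rmin_l. assert (Hm2 : Rmin d (T - p) <= T - p) by apply Rmin_r.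
      exists q. split; [unfold q; lra|].
      assert (Hz : forall t, p < t < q -> phi1 gamma lam t <> 0).
      { intros t Ht. apply Hn. unfold q in Ht; lra. rewrite Rabs_right; unfold q in Ht; lra. }
      destruct (L2 T gamma u lam N L lam0 p q HS ltac:(lra) ltac:(unfold q; lra) ltac:(unfold q; lra) Hz) as (_ & B & _).
      intros t Ht. split; [auto|]. rewrite B by lra. rewrite H2.
      destruct (sgnR_pm (phi1 gamma lam ((p+q)/2))) as [E|E]; rewrite E; intro; apply HL; nra.
    + destruct (near_nz1 _ _ _ _ _ _ _ p HS ltac:(lra) H1) as (d1 & Hd1 & Hn1).
      destruct (near_nz2 _ _ _ _ _ _ _ p HS ltac:(lra) H2) as (d2 & Hd2 & Hn2).
      set (d := Rmin (Rmin d1 d2) (T - p)).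
      assert (Hm : 0 < d) by (apply Rmin_glb_lt; [apply Rmin_glb_lt|]; lra).
      assert (Hm1 : d <= Rmin d1 d2) by apply Rmin_l. assert (Hm2 : d <= T - p) by apply Rmin_r.
      assert (Hm3 : Rmin d1 d2 <= d1) by apply Rmin_l. assert (Hm4 : Rmin d1 d2 <= d2) by apply Rmin_r.
      exists (p + d/2). split; [lra|]. intros t Ht.
      split; [apply Hn1|apply Hn2]; try lra; rewrite Rabs_right; lra.
Qed.

Lemma ext T gamma u lam N L lam0 p : setup T gamma u lam N L lam0 -> L <> 0 -> 0 <= p < T ->
  exists q, p < q <= T /\ regp gamma lam p q /\ (q = T \/ Zp gamma lam q).
Proof.
  intros HS HL Hp.
  set (A := fun q => p < q <= T /\ regp gamma lam p q).
  destruct (start _ _ _ _ _ _ _ _ HS HL Hp) as (q0 & Hq0 & Hr0).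
  destruct (completeness A) as [s Hs].
  { exists T. intros x [Hx _]; lra. } { exists q0; split; auto. }
  assert (Hs1 : q0 <= s) by (apply (proj1 Hs); split; auto).
  assert (Hs2 : s <= T) by (apply (proj2 Hs); intros x [Hx _]; lra).
  assert (Hreg : regp gamma lam p s).
  { intros t Ht. destruct (lub_approx A s Hs (s - t) ltac:(lra)) as (x & [Hx Hrx] & Hx1 & Hx2).
    apply Hrx; lra. }
  exists s. split; [lra|split; auto].
  destruct (Req_dec s T) as [|HsT]; [left; auto|right].
  unfold Zp. apply NNPP. intros Hn. apply not_or_and in Hn. destruct Hn as [H1 H2].
  destruct (near_nz1 _ _ _ _ _ _ _ s HS ltac:(lra) H1) as (d1 & Hd1 & Hn1).
  destruct (near_nz2 _ _ _ _ _ _ _ s HS ltac:(lra) H2) as (d2 & Hd2 & Hn2).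
  set (d := Rmin (Rmin d1 d2) (T - s)).
  assert (Hm : 0 < d) by (apply Rmin_glb_lt; [apply Rmin_glb_lt|]; lra).
  assert (Hm1 : d <= Rmin d1 d2) by apply Rmin_l. assert (Hm2 : d <= T - s) by apply Rmin_r.
  assert (Hm3 : Rmin d1 d2 <= d1) by apply Rmin_l. assert (Hm4 : Rmin d1 d2 <= d2) by apply Rmin_r.
  assert (HA : A (s + d/2)).
  { split; [lra|]. intros t Ht. destruct (Rlt_le_dec t s) as [Hts|Hts]. apply Hreg; lra.
    split; [apply Hn1|apply Hn2]; try lra; rewrite Rabs_right; lra. }
  assert (H := proj1 Hs _ HA). lra.
Qed.

Lemma next T gamma u lam N L lam0 z : setup T gamma u lam N L lam0 -> L <> 0 -> 0 <= z ->
  Zp gamma lam z -> z + lam0 / (2 * Rabs L) < T ->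
  Zp gamma lam (z + lam0 / (2 * Rabs L)) /\ regp gamma lam z (z + lam0 / (2 * Rabs L)).
Proof.
  intros HS HL Hz HZ HzT.
  assert (Hs : 0 < lam0 / (2 * Rabs L)).
  { destruct HS as (_ & _ & Hl0 & _). apply Rdiv_lt_0_compat; auto. assert (0 < Rabs L) by (apply Rabs_pos_lt; auto); lra. }
  destruct (ext _ _ _ _ _ _ _ z HS HL ltac:(lra)) as (q & Hq & Hr & Hq2).
  destruct (CL _ _ _ _ _ _ _ z q HS HL Hz ltac:(lra) ltac:(lra) Hr) as (C1 & C2 & C3).
  assert (HqZ : q = T -> False) by (intros ->; lra).
  destruct Hq2 as [Hq2|Hq2]; [exfalso; auto|].
  assert (E : q - z = lam0 / (2 * Rabs L)).
  { destruct HZ as [HZ|HZ]; [apply (C2 HZ)|apply (C3 HZ)]; auto. }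
  replace (z + lam0 / (2 * Rabs L)) with q by lra. auto.
Qed.

Lemma last T gamma u lam N L lam0 z : setup T gamma u lam N L lam0 -> L <> 0 -> 0 <= z < T ->
  Zp gamma lam z -> T <= z + lam0 / (2 * Rabs L) -> regp gamma lam z T.
Proof.
  intros HS HL Hz HZ HzT.
  destruct (ext _ _ _ _ _ _ _ z HS HL ltac:(lra)) as (q & Hq & Hr & Hq2).
  destruct (CL _ _ _ _ _ _ _ z q HS HL ltac:(lra) ltac:(lra) ltac:(lra) Hr) as (C1 & C2 & C3).
  destruct Hq2 as [Hq2|Hq2]; [subst; auto|].
  assert (E : q - z = lam0 / (2 * Rabs L)).
  { destruct HZ as [HZ|HZ]; [apply (C2 HZ)|apply (C3 HZ)]; auto. }
  replace T with q by lra. auto.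
Qed.

Lemma alt T gamma u lam N L lam0 p q : setup T gamma u lam N L lam0 -> L <> 0 -> 0 <= p -> p < q -> q <= T ->
  regp gamma lam p q -> Zp gamma lam p -> Zp gamma lam q ->
  (phi1 gamma lam p = 0 <-> phi2 gamma lam q = 0).
Proof.
  intros HS HL Hp Hpq HqT Hr Zp1 Zq.
  destruct (CL _ _ _ _ _ _ _ p q HS HL Hp Hpq HqT Hr) as (C1 & C2 & C3).
  split. intros H; apply (proj2 (C2 H) Zq).
  intros H. destruct Zp1 as [Z|Z]; auto. exfalso. apply (proj1 (C3 Z) H).
Qed.

Lemma junction T gamma u lam N L lam0 p z r : setup T gamma u lam N L lam0 -> L <> 0 ->
  0 <= p -> p < z -> z < r -> r <= T -> regp gamma lam p z -> regp gamma lam z r ->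
  let a1 := sgnR (phi1 gamma lam ((p+z)/2)) in let a2 := sgnR (phi2 gamma lam ((p+z)/2)) in
  let b1 := sgnR (phi1 gamma lam ((z+r)/2)) in let b2 := sgnR (phi2 gamma lam ((z+r)/2)) in
  (phi1 gamma lam z = 0 -> a1 <> b1 /\ a2 = b2) /\ (phi2 gamma lam z = 0 -> a2 <> b2 /\ a1 = b1).
Proof.
  intros HS HL Hp Hpz Hzr HrT R1 R2 a1 a2 b1 b2.
  destruct (arc_facts _ _ _ _ _ _ _ p z HS Hp Hpz ltac:(lra) R1) as (A & B & C & _).
  destruct (arc_facts _ _ _ _ _ _ _ z r HS ltac:(lra) Hzr HrT R2) as (A' & B' & C' & _).
  fold a1 a2 in A, B, C. fold b1 b2 in A', B', C'.
  destruct (A z ltac:(lra)) as [Az1 Az2]. destruct (A ((p+z)/2) ltac:(lra)) as [Am1 Am2].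
  destruct (A' ((z+r)/2) ltac:(lra)) as [Am1' Am2'].
  destruct (B ((p+z)/2) ltac:(lra)) as [Bm1 Bm2]. destruct (B' ((z+r)/2) ltac:(lra)) as [Bm1' Bm2'].
  assert (Ha1 : a1 = 1 \/ a1 = -1) by apply sgnR_pm. assert (Ha2 : a2 = 1 \/ a2 = -1) by apply sgnR_pm.
  assert (Hb1 : b1 = 1 \/ b1 = -1) by apply sgnR_pm. assert (Hb2 : b2 = 1 \/ b2 = -1) by apply sgnR_pm.
  assert (N1 : phi1 gamma lam z = 0 -> phi2 gamma lam z <> 0) by (apply (not_both0 _ _ _ _ _ _ _ z HS); lra).
  assert (N2 : phi2 gamma lam z = 0 -> phi1 gamma lam z <> 0).
  { intros H2 H1. apply (not_both0 _ _ _ _ _ _ _ z HS ltac:(lra) H1 H2). }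
  destruct C as (C1 & C2 & C3 & C4). destruct C' as (C1' & C2' & C3' & C4').
  set (w1 := phi1 gamma lam z) in *. set (w2 := phi2 gamma lam z) in *.
  set (x1 := phi1 gamma lam p) in *. set (x2 := phi2 gamma lam p) in *.
  set (m1 := phi1 gamma lam ((p+z)/2)) in *. set (m2 := phi2 gamma lam ((p+z)/2)) in *.
  set (n1 := phi1 gamma lam ((z+r)/2)) in *. set (n2 := phi2 gamma lam ((z+r)/2)) in *.
  assert (HLp : 0 < L \/ L < 0) by (destruct (Rtotal_order L 0) as [|[|]]; auto; lra).
  split; intros H0; specialize (N1); specialize (N2).
  - assert (Hw2 : w2 <> 0) by auto.
    assert (E2 : a2 = b2).
    { destruct Ha2 as [E|E]; destruct Hb2 as [E'|E']; rewrite E, E' in *; auto;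
      exfalso; apply Hw2; lra. }
    split; [|auto]. rewrite <- E2 in *. clear E2.
    intro E1. rewrite <- E1 in *.
    destruct Ha1 as [E|E]; destruct Ha2 as [E'|E']; rewrite E, E' in *; destruct HLp; nra.
  - assert (Hw1 : w1 <> 0) by auto.
    assert (E1 : a1 = b1).
    { destruct Ha1 as [E|E]; destruct Hb1 as [E'|E']; rewrite E, E' in *; auto;
      exfalso; apply Hw1; lra. }
    split; [|auto]. rewrite <- E1 in *. clear E1.
    intro E2. rewrite <- E2 in *.
    destruct Ha1 as [E|E]; destruct Ha2 as [E'|E']; rewrite E, E' in *; destruct HLp; nra.
Qed.

Lemma maxarc T gamma lam a b : 0 <= a -> a < b -> b <= T -> regp gamma lam a b ->
  (a = 0 \/ Zp gamma lam a) -> (b = T \/ Zp gamma lam b) -> regular_arc T gamma lam a b.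
Proof.
  intros Ha Hab HbT Hr Za Zb. split.
  { split; [auto|split; [auto|split; [auto|]]]. intros t Ht; apply Hr; auto. }
  intros a' b' Ha' Hb' (H1 & H2 & H3 & H4). split.
  - destruct (Rle_lt_or_eq_dec a' a Ha') as [Hl|]; auto. exfalso.
    destruct Za as [Za|[Za|Za]]; [lra| |]; destruct (H4 a ltac:(lra)) as [P Q]; auto.
  - destruct (Rle_lt_or_eq_dec b b' Hb') as [Hl|]; auto. exfalso.
    destruct Zb as [Zb|[Zb|Zb]]; [lra| |]; destruct (H4 b ltac:(lra)) as [P Q]; auto.
Qed.

Lemma arch_step X s : 0 < s -> 0 < X -> exists m : nat, INR m * s < X <= INR (S m) * s.
Proof.
  intros Hs HX.
  destruct (archimed_cor1 (s / X) ltac:(apply Rdiv_lt_0_compat; lra)) as (M & HM & HM0).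
  assert (HMp : 0 < INR M) by (apply lt_0_INR; lia).
  assert (HXM : X <= INR M * s).
  { assert (/ INR M * X < s / X * X) by (apply Rmult_lt_compat_r; lra).
    replace (s / X * X) with s in H by (field; lra).
    assert (X < INR M * s); [|lra].
    replace X with (INR M * (/ INR M * X)) by (field; lra). apply Rmult_lt_compat_l; lra. }
  clear HM HM0 HMp. induction M.
  - simpl in HXM. lra.
  - destruct (Rle_dec X (INR M * s)) as [H|H]; auto. exists M. lra.
Qed.

Lemma decomp_Lnz T gamma u lam N L lam0 : setup T gamma u lam N L lam0 -> L <> 0 ->
  exists n tt, ((1 <= n)%nat /\ tt O = 0 /\ tt n = T) /\
    (forall i, (i < n)%nat -> 0 <= tt i /\ tt i < tt (S i) /\ tt (S i) <= T /\ regp gamma lam (tt i) (tt (S i))) /\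
    (forall i, (0 < i)%nat -> (i < n)%nat -> Zp gamma lam (tt i)).
Proof.
  intros HS HL. assert (HS' := HS). destruct HS' as (HT & HN & Hl0 & _).
  destruct (ext _ _ _ _ _ _ _ 0 HS HL ltac:(lra)) as (q1 & Hq1 & Hr1 & Hz1).
  destruct (Req_dec q1 T) as [Hq1T|Hq1T].
  { exists 1%nat, (fun i => match i with O => 0 | _ => T end). split; [split; auto|split].
    - intros i Hi. assert (i = O) by lia. subst i. simpl. rewrite <- Hq1T. split; [lra|split; [lra|split; [lra|auto]]].
    - intros; lia. }
  destruct Hz1 as [Hz1|Hz1]; [contradiction|].
  set (s := lam0 / (2 * Rabs L)).
  assert (Hs : 0 < s) by (unfold s; apply Rdiv_lt_0_compat; auto; assert (0 < Rabs L) by (apply Rabs_pos_lt; auto); lra).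
  destruct (arch_step (T - q1) s Hs ltac:(lra)) as (m & Hm1 & Hm2).
  set (z := fun j : nat => q1 + INR j * s).
  assert (Hzle : forall j, (j <= m)%nat -> z j < T).
  { intros j Hj. unfold z. assert (INR j * s <= INR m * s) by (apply Rmult_le_compat_r; [lra|apply le_INR; auto]). lra. }
  assert (Hzpos : forall j, q1 <= z j) by (intros j; unfold z; assert (0 <= INR j * s) by (apply Rmult_le_pos; [apply pos_INR|lra]); lra).
  assert (HzS : forall j, z (S j) = z j + s) by (intros j; unfold z; rewrite S_INR; ring).
  assert (HZ : forall j, (j <= m)%nat -> Zp gamma lam (z j)).
  { induction j; intros Hj. unfold z; simpl; replace (q1 + 0 * s) with q1 by ring; auto.
    rewrite HzS. apply (next _ _ _ _ _ _ _ (z j) HS HL); [specialize (Hzpos j); lra|apply IHj; lia|].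
    rewrite <- HzS. apply Hzle; auto. }
  assert (HR : forall j, (j < m)%nat -> regp gamma lam (z j) (z (S j))).
  { intros j Hj. rewrite HzS. apply (next _ _ _ _ _ _ _ (z j) HS HL); [specialize (Hzpos j); lra|apply HZ; lia|].
    rewrite <- HzS. apply Hzle; auto. }
  assert (HRm : regp gamma lam (z m) T).
  { apply (last _ _ _ _ _ _ _ (z m) HS HL); [specialize (Hzpos m); specialize (Hzle m (le_n m)); lra|apply HZ; lia|].
    fold s. unfold z. rewrite S_INR in Hm2. lra. }
  set (tt := fun i => match i with O => 0 | S j => Rmin T (z j) end).
  assert (Htt : forall j, (j <= m)%nat -> tt (S j) = z j).
  { intros j Hj. unfold tt. specialize (Hzle j Hj). unfold Rmin; destruct Rle_dec; lra. }
  assert (HttN : tt (S (S m)) = T).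
  { unfold tt. rewrite HzS. assert (z m + s >= T) by (unfold z; rewrite S_INR in Hm2; lra). unfold Rmin; destruct Rle_dec; lra. }
  exists (S (S m)), tt. split; [split; [lia|split; auto]|split].
  - intros i Hi. destruct i as [|j].
    + rewrite Htt by lia. simpl. replace (z 0%nat) with q1 by (unfold z; simpl; ring). split; [lra|split; [lra|split; [lra|auto]]].
    + rewrite Htt by lia. destruct (Nat.eq_dec j m) as [->|Hjm].
      * rewrite HttN. specialize (Hzpos m). specialize (Hzle m (le_n m)). split; [lra|split; [lra|split; [lra|auto]]].
      * rewrite Htt by lia. specialize (Hzpos j). assert (Hz2 := Hzle (S j) ltac:(lia)). rewrite HzS in Hz2 |- *.
        split; [lra|split; [lra|split; [lra|]]]. rewrite <- HzS. apply HR. lia.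
  - intros i Hi Hin. destruct i as [|j]; [lia|]. rewrite Htt by lia. apply HZ; lia.
Qed.

Definition cc gamma lam (tt : nat -> R) i :=
  (sgnR (phi1 gamma lam ((tt i + tt (S i))/2)), sgnR (phi2 gamma lam ((tt i + tt (S i))/2))).

Definition goodd T gamma lam n (tt : nat -> R) :=
  ((1 <= n)%nat /\ tt O = 0 /\ tt n = T) /\
  (forall i, (i < n)%nat -> 0 <= tt i /\ tt i < tt (S i) /\ tt (S i) <= T /\ regp gamma lam (tt i) (tt (S i))) /\
  (forall i, (0 < i)%nat -> (i < n)%nat -> Zp gamma lam (tt i)).

Lemma finish T gamma u lam N L lam0 n tt s : setup T gamma u lam N L lam0 -> extremal_pair T gamma u lam ->
  goodd T gamma lam n tt -> 0 < s ->
  (forall i, (i < n)%nat -> tt (S i) - tt i <= s) ->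
  (forall i, (0 < i)%nat -> (S i < n)%nat -> tt (S i) - tt i = s) ->
  (forall i, (0 < i)%nat -> (i < n)%nat ->
     (phi1 gamma lam (tt i) = 0 -> fst (cc gamma lam tt (pred i)) <> fst (cc gamma lam tt i) /\ snd (cc gamma lam tt (pred i)) = snd (cc gamma lam tt i)) /\
     (phi2 gamma lam (tt i) = 0 -> snd (cc gamma lam tt (pred i)) <> snd (cc gamma lam tt i) /\ fst (cc gamma lam tt (pred i)) = fst (cc gamma lam tt i))) ->
  (forall i, (0 < i)%nat -> (S i < n)%nat -> (phi1 gamma lam (tt i) = 0 <-> phi2 gamma lam (tt (S i)) = 0)) ->
  regular_bang_bang T gamma /\
  exists (n : nat) (tt : nat -> R) (c : nat -> R * R) (s : R),
    arc_decomposition T gamma lam n tt /\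
    (forall i, (i < n)%nat ->
       pm1 (c i) /\ ae_on (tt i) (tt (S i)) (fun t => u t = c i)) /\
    0 < s /\
    (forall i, (i < n)%nat -> tt (S i) - tt i <= s) /\
    (forall i, (0 < i)%nat -> (S i < n)%nat -> tt (S i) - tt i = s) /\
    (forall i, (0 < i)%nat -> (i < n)%nat ->
       (fst (c (pred i)) <> fst (c i) <-> snd (c (pred i)) = snd (c i))) /\
    (forall i, (0 < i)%nat -> (S i < n)%nat ->
       (fst (c (pred i)) <> fst (c i) <-> snd (c i) <> snd (c (S i)))).
Proof.
  intros HS HE ((Hn1 & Ht0 & HtT) & Hinc & HZ) Hs Hle Heq Hjun Halt.
  assert (HS' := HS). destruct HS' as (HT & HN & Hl0 & _).
  assert (Hdec : arc_decomposition T gamma lam n tt).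
  { split; [auto|split; [auto|split; [auto|]]]. intros i Hi. destruct (Hinc i Hi) as (A1 & A2 & A3 & A4).
    apply maxarc; auto.
    - destruct i; [left; auto|right; apply HZ; lia].
    - destruct (Nat.eq_dec (S i) n) as [E|E]; [left; rewrite E; auto|right; apply HZ; lia]. }
  split. { exists u, lam, n, tt. auto. }
  exists n, tt, (cc gamma lam tt), s. split; [auto|split; [|split; [auto|split; [auto|split; [auto|split]]]]].
  - intros i Hi. split. { unfold pm1, cc; simpl. split; apply sgnR_pm. }
    destruct (Hinc i Hi) as (A1 & A2 & A3 & A4).
    destruct (arc_facts _ _ _ _ _ _ _ _ _ HS A1 A2 A3 A4) as (_ & _ & _ & Hu).
    exists (fun t => (N t \/ t = tt i) \/ t = tt (S i)). split.
    { apply null_union; [apply null_union|]; auto using null_single. }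
    intros t Ht Hnt. apply Hu. split; apply Rnot_le_lt; intro; apply Hnt; [left; right|right]; lra.
    intro; apply Hnt; left; left; auto.
  - intros i Hi Hin. destruct (Hjun i Hi Hin) as [J1 J2].
    destruct (HZ i Hi Hin) as [Z|Z].
    + destruct (J1 Z). tauto.
    + destruct (J2 Z). tauto.
  - intros i Hi Hin.
    assert (Hl : fst (cc gamma lam tt (pred i)) <> fst (cc gamma lam tt i) <-> phi1 gamma lam (tt i) = 0).
    { destruct (Hjun i Hi ltac:(lia)) as [J1 J2]. split; [|intros Z; apply (J1 Z)].
      intros Hd. destruct (HZ i Hi ltac:(lia)) as [Z|Z]; auto. exfalso; apply Hd, (J2 Z). }
    assert (Hr : snd (cc gamma lam tt i) <> snd (cc gamma lam tt (S i)) <-> phi2 gamma lam (tt (S i)) = 0).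
    { destruct (Hjun (S i) ltac:(lia) Hin) as [J1 J2]. simpl pred in J1, J2. split; [|intros Z; apply (J2 Z)].
      intros Hd. destruct (HZ (S i) ltac:(lia) Hin) as [Z|Z]; auto. exfalso; apply Hd, (J1 Z). }
    rewrite Hl, Hr. apply Halt; auto.
Qed.

Lemma props_Lnz T gamma u lam N L lam0 n tt : setup T gamma u lam N L lam0 -> L <> 0 -> goodd T gamma lam n tt ->
  0 < lam0 / (2 * Rabs L) /\
  (forall i, (i < n)%nat -> tt (S i) - tt i <= lam0 / (2 * Rabs L)) /\
  (forall i, (0 < i)%nat -> (S i < n)%nat -> tt (S i) - tt i = lam0 / (2 * Rabs L)) /\
  (forall i, (0 < i)%nat -> (i < n)%nat ->
     (phi1 gamma lam (tt i) = 0 -> fst (cc gamma lam tt (pred i)) <> fst (cc gamma lam tt i) /\ snd (cc gamma lam tt (pred i)) = snd (cc gamma lam tt i)) /\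
     (phi2 gamma lam (tt i) = 0 -> snd (cc gamma lam tt (pred i)) <> snd (cc gamma lam tt i) /\ fst (cc gamma lam tt (pred i)) = fst (cc gamma lam tt i))) /\
  (forall i, (0 < i)%nat -> (S i < n)%nat -> (phi1 gamma lam (tt i) = 0 <-> phi2 gamma lam (tt (S i)) = 0)).
Proof.
  intros HS HL ((Hn1 & Ht0 & HtT) & Hinc & HZ).
  assert (HS' := HS). destruct HS' as (HT & HN & Hl0 & _).
  split. { apply Rdiv_lt_0_compat; auto. assert (0 < Rabs L) by (apply Rabs_pos_lt; auto); lra. }
  split; [|split; [|split]].
  - intros i Hi. destruct (Hinc i Hi) as (A1 & A2 & A3 & A4).
    apply (CL _ _ _ _ _ _ _ _ _ HS HL A1 A2 A3 A4).
  - intros i Hi Hin. destruct (Hinc i ltac:(lia)) as (A1 & A2 & A3 & A4).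
    destruct (CL _ _ _ _ _ _ _ _ _ HS HL A1 A2 A3 A4) as (_ & C2 & C3).
    assert (Zq := HZ (S i) ltac:(lia) Hin).
    destruct (HZ i Hi ltac:(lia)) as [Z|Z]; [apply (proj2 (C2 Z) Zq)|apply (proj2 (C3 Z) Zq)].
  - intros i Hi Hin. destruct i as [|j]; [lia|]. simpl pred.
    destruct (Hinc j ltac:(lia)) as (A1 & A2 & A3 & A4).
    destruct (Hinc (S j) Hin) as (B1 & B2 & B3 & B4).
    destruct (junction _ _ _ _ _ _ _ (tt j) (tt (S j)) (tt (S (S j))) HS HL A1 A2 B2 B3 A4 B4) as [J1 J2].
    unfold cc; simpl. split; auto.
  - intros i Hi Hin. destruct (Hinc i ltac:(lia)) as (A1 & A2 & A3 & A4).
    apply (alt _ _ _ _ _ _ _ _ _ HS HL A1 A2 A3 A4); apply HZ; lia.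
Qed.

Lemma main_from_setup T gamma u lam N L lam0 : setup T gamma u lam N L lam0 -> extremal_pair T gamma u lam ->
  regular_bang_bang T gamma /\
  exists (n : nat) (tt : nat -> R) (c : nat -> R * R) (s : R),
    arc_decomposition T gamma lam n tt /\
    (forall i, (i < n)%nat ->
       pm1 (c i) /\ ae_on (tt i) (tt (S i)) (fun t => u t = c i)) /\
    0 < s /\
    (forall i, (i < n)%nat -> tt (S i) - tt i <= s) /\
    (forall i, (0 < i)%nat -> (S i < n)%nat -> tt (S i) - tt i = s) /\
    (forall i, (0 < i)%nat -> (i < n)%nat ->
       (fst (c (pred i)) <> fst (c i) <-> snd (c (pred i)) = snd (c i))) /\
    (forall i, (0 < i)%nat -> (S i < n)%nat ->
       (fst (c (pred i)) <> fst (c i) <-> snd (c i) <> snd (c (S i)))).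
Proof.
  intros HS HE. assert (HS' := HS). destruct HS' as (HT & HN & Hl0 & _ & _ & _ & HLc & Hsum & _).
  destruct (Req_dec L 0) as [HL|HL].
  - set (tt := fun i : nat => match i with O => 0 | _ => T end).
    assert (Hg : goodd T gamma lam 1 tt).
    { split; [split; [lia|split; auto]|split].
      - intros i Hi. assert (i = O) by lia. subst i. simpl. split; [lra|split; [lra|split; [lra|]]].
        intros t Ht. rewrite (phi1_eq _ _ _ _ _ _ _ _ HS), (phi2_eq _ _ _ _ _ _ _ _ HS) by lra.
        specialize (Hsum t ltac:(lra)). rewrite (phi1_eq _ _ _ _ _ _ _ _ HS), (phi2_eq _ _ _ _ _ _ _ _ HS) in Hsum by lra.
        rewrite HL in *. replace (fst (lam t) + - 0 * fst (gamma t)) with (fst (lam t)) in * by ring.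
        replace (fst (lam t) + 0 * fst (gamma t)) with (fst (lam t)) in * by ring.
        split; intro E; rewrite E, Rabs_R0 in Hsum; lra.
      - intros; lia. }
    apply (finish _ _ _ _ _ _ _ 1 tt T HS HE Hg HT).
    + intros i Hi. assert (i = O) by lia. subst. simpl. lra.
    + intros; lia.
    + intros; lia.
    + intros; lia.
  - destruct (decomp_Lnz _ _ _ _ _ _ _ HS HL) as (n & tt & Hg).
    destruct (props_Lnz _ _ _ _ _ _ _ _ _ HS HL Hg) as (P1 & P2 & P3 & P4 & P5).
    apply (finish _ _ _ _ _ _ _ _ _ _ HS HE Hg P1 P2 P3 P4 P5).
Qed.

Lemma Phi_cont_raw T gamma lam : 0 < T -> abs_cont_on T (fun t => fst (lam t)) ->
  abs_cont_on T (fun t => fst (gamma t)) -> abs_cont_on T (fun t => snd (lam t)) ->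
  continuity (fun t => Rabs (Phi1 T gamma lam t) + Rabs (Phi2 T gamma lam t)).
Proof.
  intros HT H1 H2 H3.
  assert (C1 := ac_clamp_cont T _ HT H1). assert (C2 := ac_clamp_cont T _ HT H2).
  assert (C3 := ac_clamp_cont T _ HT H3).
  assert (C4 : continuity (fun _ : R => 1)) by (apply continuity_const; intros ? ?; auto).
  assert (P1 : continuity (Phi1 T gamma lam)).
  { unfold Phi1, phi1, pairing, Y1. simpl.
    exact (continuity_plus _ _ (continuity_mult _ _ C1 C4) (continuity_mult _ _ C3 C2)). }
  assert (P2 : continuity (Phi2 T gamma lam)).
  { unfold Phi2, phi2, pairing, Y2. simpl.
    exact (continuity_plus _ _ (continuity_mult _ _ C1 C4) (continuity_mult _ _ C3 (continuity_opp _ C2))). }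
  exact (continuity_plus _ _ (continuity_comp _ _ P1 Rcontinuity_abs) (continuity_comp _ _ P2 Rcontinuity_abs)).
Qed.

Lemma sum_all T gamma lam N lam0 : 0 < T -> abs_cont_on T (fun t => fst (lam t)) ->
  abs_cont_on T (fun t => fst (gamma t)) -> abs_cont_on T (fun t => snd (lam t)) -> null_set N ->
  (forall t, 0 <= t <= T -> ~ N t -> Rabs (phi1 gamma lam t) + Rabs (phi2 gamma lam t) = lam0) ->
  forall t, 0 <= t <= T -> Rabs (phi1 gamma lam t) + Rabs (phi2 gamma lam t) = lam0.
Proof.
  intros HT H1 H2 H3 HN Hg t0 Ht0. apply NNPP. intros Hne.
  set (h := fun t => Rabs (Phi1 T gamma lam t) + Rabs (Phi2 T gamma lam t)).
  assert (Eh : forall t, 0 <= t <= T -> h t = Rabs (phi1 gamma lam t) + Rabs (phi2 gamma lam t)).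
  { intros t Ht. unfold h. rewrite Phi1_eq, Phi2_eq; auto. }
  destruct (cont_neq h t0 lam0 (Phi_cont_raw T gamma lam HT H1 H2 H3 t0) ltac:(rewrite Eh; auto)) as (d & Hd & Hh).
  set (p := Rmax 0 (t0 - d/2)). set (q := Rmin T (t0 + d/2)).
  assert (Hp : 0 <= p /\ t0 - d/2 <= p /\ p <= t0) by (unfold p, Rmax; destruct Rle_dec; lra).
  assert (Hq : q <= T /\ q <= t0 + d/2 /\ t0 <= q) by (unfold q, Rmin; destruct Rle_dec; lra).
  assert (Hpq : p < q).
  { unfold p, q, Rmax, Rmin; repeat destruct Rle_dec; lra. }
  destruct (null_dense N p q HN ltac:(lra) Hpq) as (t & Ht & HNt).
  apply (Hh t). apply Rabs_lt_iff; lra. rewrite Eh by lra. apply Hg; auto. lra.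
Qed.

Lemma ham_derivs (l p v : R * R) dx dy dl1 :
  derivable_pt_lim (fun x => Ham l (x, snd p) v) (fst p) dx ->
  derivable_pt_lim (fun y => Ham l (fst p, y) v) (snd p) dy ->
  derivable_pt_lim (fun a => Ham (a, snd l) p v) (fst l) dl1 ->
  dx = fst v * snd l - snd v * snd l /\ dy = 0 /\ dl1 = fst v + snd v.
Proof.
  intros D1 D2 D3. split; [|split].
  - apply (uniqueness_limite _ _ _ _ D1).
    apply (deriv_ext (fun y => (fst v * fst l + snd v * fst l) + (fst v * snd l - snd v * snd l) * y)).
    { intros y; unfold Ham, pairing, Y1, Y2; simpl; ring. } apply deriv_affine.
  - apply (uniqueness_limite _ _ _ _ D2).
    apply (deriv_ext (fun y => (fst v * (fst l + snd l * fst p) + snd v * (fst l + snd l * - fst p)) + 0 * y)).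
    { intros y; unfold Ham, pairing, Y1, Y2; simpl; ring. } apply deriv_affine.
  - apply (uniqueness_limite _ _ _ _ D3).
    apply (deriv_ext (fun a => (fst v * snd l * fst p - snd v * snd l * fst p) + (fst v + snd v) * a)).
    { intros y; unfold Ham, pairing, Y1, Y2; simpl; ring. } apply deriv_affine.
Qed.

Lemma mk_setup T gamma u lam : extremal_pair T gamma u lam -> (exists a b, regular_arc T gamma lam a b) ->
  exists N L lam0, setup T gamma u lam N L lam0.
Proof.
  intros ((ACx & ACy & _ & _ & (N1 & HN1 & Hb) & _) & ACl1 & ACl2 & Hnz & (N2 & HN2 & Hh) & lam0 & Hl0 & (N3 & HN3 & HH)) (a & b & (Ha & Hab & HbT & Hreg) & _).
  set (N := fun t => (N1 t \/ N2 t) \/ N3 t).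
  assert (HN : null_set N) by (apply null_union; [apply null_union|]; auto).
  assert (Good : forall t, 0 <= t <= T -> ~ N t ->
     Rabs (fst (u t)) <= 1 /\ Rabs (snd (u t)) <= 1 /\
     fst (u t) * phi1 gamma lam t + snd (u t) * phi2 gamma lam t = lam0 /\
     Rabs (phi1 gamma lam t) + Rabs (phi2 gamma lam t) = lam0 /\
     derivable_pt_lim (fun s => fst (lam s)) t (-(fst (u t) - snd (u t)) * snd (lam t)) /\
     derivable_pt_lim (fun s => snd (lam s)) t 0 /\
     derivable_pt_lim (fun s => fst (gamma s)) t (fst (u t) + snd (u t))).
  { intros t Ht HNt.
    destruct (Hb t Ht ltac:(intro; apply HNt; left; left; auto)) as [B1 B2].
    destruct (HH t Ht ltac:(intro; apply HNt; right; auto)) as [E1 E2].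
    destruct (Hh t Ht ltac:(intro; apply HNt; left; right; auto)) as (dx & dy & dl1 & dl2 & D1 & D2 & D3 & D4 & D5 & D6 & D7 & D8).
    destruct (ham_derivs _ _ _ _ _ _ D1 D2 D3) as (Ex & Ey & El).
    split; [auto|split; [auto|split; [exact E1|split; [auto|split; [|split]]]]].
    - eapply deriv_eq; [exact D5|]. rewrite Ex; ring.
    - eapply deriv_eq; [exact D6|]. rewrite Ey; ring.
    - eapply deriv_eq; [exact D7|]. rewrite El; ring. }
  assert (HT : 0 < T) by lra.
  assert (HLc : forall t, 0 <= t <= T -> snd (lam t) = snd (lam 0)).
  { intros t Ht.
    assert (E : snd (lam t) - snd (lam 0) = 0 * (t - 0)); [|lra].
    apply (ac_eq T (fun s => snd (lam s)) 0 t N 0 ACl2); try lra; auto.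
    intros s Hs HNs. destruct (Good s ltac:(lra) HNs) as (_ & _ & _ & _ & _ & D & _). auto. }
  exists N, (snd (lam 0)), lam0.
  destruct (null_dense N a b HN Ha Hab) as (t & Ht & HNt).
  assert (Hlp : 0 < lam0).
  { destruct (Good t ltac:(lra) HNt) as (_ & _ & _ & S & _). destruct (Hreg t Ht) as [P Q].
    assert (0 < Rabs (phi1 gamma lam t)) by (apply Rabs_pos_lt; auto).
    assert (0 <= Rabs (phi2 gamma lam t)) by apply Rabs_pos. lra. }
  split; [auto|split; [auto|split; [auto|split; [auto|split; [auto|split; [auto|split; [auto|split]]]]]]].
  - apply (sum_all T gamma lam N lam0 HT ACl1 ACx ACl2 HN). intros s Hs HNs. apply (Good s Hs HNs).
  - intros s Hs HNs. destruct (Good s Hs HNs) as (G1 & G2 & G3 & _ & G5 & _ & G7).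
    split; [auto|split; [auto|split; [auto|split; [|auto]]]]. rewrite <- (HLc s Hs). auto.
Qed.

Theorem mainTheorem7 (T : R) (gamma u lam : R -> R * R) :
  extremal_pair T gamma u lam ->
  (exists a b, regular_arc T gamma lam a b) ->
  regular_bang_bang T gamma /\
  exists (n : nat) (tt : nat -> R) (c : nat -> R * R) (s : R),
    arc_decomposition T gamma lam n tt /\
    (* the control is constant, with values in {1,-1}^2, on each arc *)
    (forall i, (i < n)%nat ->
       pm1 (c i) /\ ae_on (tt i) (tt (S i)) (fun t => u t = c i)) /\
    (* all arc durations equal s, except first and last, which are <= s *)
    0 < s /\
    (forall i, (i < n)%nat -> tt (S i) - tt i <= s) /\
    (forall i, (0 < i)%nat -> (S i < n)%nat -> tt (S i) - tt i = s) /\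
    (* at each junction t_i (0<i<n) exactly one component changes sign *)
    (forall i, (0 < i)%nat -> (i < n)%nat ->
       (fst (c (pred i)) <> fst (c i) <-> snd (c (pred i)) = snd (c i))) /\
    (* and the changing component alternates between consecutive junctions *)
    (forall i, (0 < i)%nat -> (S i < n)%nat ->
       (fst (c (pred i)) <> fst (c i) <-> snd (c i) <> snd (c (S i)))).
Proof.
  intros HE Harc. destruct (mk_setup _ _ _ _ HE Harc) as (N & L & lam0 & HS).
  exact (main_from_setup _ _ _ _ _ _ _ HS HE).
Qed.
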